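(* Let $r\in\mathbb{N}$. There is a constant $c_3>0$ depending only on $r$ such that for every $b\in(0,\pi]$, every $n\in\mathbb{N}$, every trigonometric polynomial $T_n\in\mathcal{T}_n$ satisfying $tT_n^{(r+1)}(t)\ge 0$ for $|t|\le b$, and every algebraic polynomial $P_r$ of degree $\le r$, $$n\|F_r+P_r-T_n\|_{[-b,b]}\ge c_3 b^r,$$ where $F_r(x):=\frac{1}{r!}|x|x^{r-1}$.
   Context: $\mathcal{T}_n$ is the space of real trigonometric polynomials of degree $\le n$. For a function $g$ on $[a,b]$, $\|g\|_{[a,b]}:=\max_{x\in[a,b]}|g(x)|$. *)

(* Defs.v *)
From Stdlib Require Import Reals Lra Arith ZArith Factorial.
From Coquelicot Require Import Coquelicot.
Open Scope R_scope.

Definition is_trig_poly (n : nat) (T : R -> R) : Prop :=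
  exists a b : nat -> R, forall x : R,
    T x = a 0%nat + sum_f 1 n (fun k => a k * cos (INR k * x) + b k * sin (INR k * x)).

Definition is_alg_poly (r : nat) (P : R -> R) : Prop :=
  exists p : nat -> R, forall x : R, P x = sum_f_R0 (fun k => p k * x ^ k) r.

(* F_r(x) = |x| x^(r-1) / r!  (x^(r-1) as an integer power, relevant only for r = 0). *)
Definition F (r : nat) (x : R) : R :=
  / INR (fact r) * (Rabs x * powerRZ x (Z.of_nat r - 1)).

(* Main.v *)
Require Import Defs.
From Stdlib Require Import Reals Lra Lia Arith ZArith Factorial Classical IndefiniteDescription.
From Coquelicot Require Import Coquelicot.
Open Scope R_scope.

Lemma dplus (f g : R -> R) (x a b : R) : is_derive f x a -> is_derive g x b ->
  is_derive (fun t => f t + g t) x (a + b).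
Proof. intros Ha Hb. apply (is_derive_plus f g x a b Ha Hb). Qed.
Lemma dminus (f g : R -> R) (x a b : R) : is_derive f x a -> is_derive g x b ->
  is_derive (fun t => f t - g t) x (a - b).
Proof. intros Ha Hb. apply (is_derive_minus f g x a b Ha Hb). Qed.
Lemma dmult (f g : R -> R) (x a b : R) : is_derive f x a -> is_derive g x b ->
  is_derive (fun t => f t * g t) x (a * g x + f x * b).
Proof. intros Ha Hb. apply (is_derive_mult f g x a b Ha Hb). intros; apply Rmult_comm. Qed.
Lemma dscal (k : R) (f : R -> R) (x a : R) : is_derive f x a -> is_derive (fun t => k * f t) x (k * a).
Proof. apply is_derive_scal. Qed.
Lemma dconst (c x : R) : is_derive (fun _ => c) x 0.
Proof. apply (is_derive_const c x). Qed.
Lemma did (x : R) : is_derive (fun t => t) x 1.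
Proof. apply (is_derive_id x). Qed.
Lemma dcos (x : R) : is_derive cos x (- sin x).
Proof. apply is_derive_Reals. apply derivable_pt_lim_cos. Qed.
Lemma dsin (x : R) : is_derive sin x (cos x).
Proof. apply is_derive_Reals. apply derivable_pt_lim_sin. Qed.
Lemma dcomp (f g : R -> R) (x a b : R) : is_derive f (g x) a -> is_derive g x b ->
  is_derive (fun t => f (g t)) x (b * a).
Proof. intros Ha Hb. apply (is_derive_comp f g x a b Ha Hb). Qed.
Lemma dext (f g : R -> R) (x a b : R) : is_derive f x a -> (forall t, f t = g t) -> a = b -> is_derive g x b.
Proof. intros H E <-. apply (is_derive_ext f g x a E H). Qed.

Lemma deriv_cont (f : R -> R) (df x : R) : is_derive f x df -> continuity_pt f x.
Proof.
  intro H. apply derivable_continuous_pt. exists df. apply is_derive_Reals. exact H.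
Qed.

Lemma rolle_d (f df : R -> R) (a b : R) : a < b -> (forall x, is_derive f x (df x)) -> f a = f b ->
  exists c, a < c < b /\ df c = 0.
Proof.
  intros Hab Hd Hf.
  assert (pr : forall x, a < x < b -> derivable_pt f x).
  { intros x _. exists (df x). apply is_derive_Reals. apply Hd. }
  destruct (Rolle f a b pr) as [c [P Hc]]; auto.
  - intros x _. apply (deriv_cont f (df x)). apply Hd.
  - exists c. split; auto.
    rewrite <- Hc. symmetry. apply derive_pt_eq_0. apply is_derive_Reals. apply Hd.
Qed.

Lemma mvt_d (f df : R -> R) (a b : R) : (forall x, is_derive f x (df x)) ->
  exists c, Rmin a b <= c <= Rmax a b /\ f b - f a = df c * (b - a).
Proof.
  intros Hd. apply MVT_gen.
  - intros; apply Hd.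
  - intros x _. apply (deriv_cont f (df x)). apply Hd.
Qed.

Inductive PD : nat -> (R -> R) -> Prop :=
| PDc d c : PD d (fun _ => c)
| PDplus d f g : PD d f -> PD d g -> PD d (fun t => f t + g t)
| PDscal d a f : PD d f -> PD d (fun t => a * f t)
| PDx d f : PD d f -> PD (S d) (fun t => t * f t)
| PDlift d f : PD d f -> PD (S d) f
| PDext d f g : PD d f -> (forall t, f t = g t) -> PD d g.

Lemma PD_le d d' f : PD d f -> (d <= d')%nat -> PD d' f.
Proof. intros H Hle. induction Hle; auto. apply PDlift; auto. Qed.

Lemma PD0_const_aux d f : PD d f -> d = 0%nat -> exists c, forall t, f t = c.
Proof.
  induction 1; intros E.
  - exists c; auto.
  - destruct (IHPD1 E) as [c1 H1]; destruct (IHPD2 E) as [c2 H2].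
    exists (c1 + c2); intros; rewrite H1, H2; auto.
  - destruct (IHPD E) as [c1 H1]. exists (a * c1); intros; rewrite H1; auto.
  - discriminate.
  - discriminate.
  - destruct (IHPD E) as [c1 H1]. exists c1; intros; rewrite <- H0; auto.
Qed.
Lemma PD0_const f : PD 0 f -> exists c, forall t, f t = c.
Proof. intros H; apply (PD0_const_aux 0 f H); auto. Qed.

Lemma PD_deriv d f : PD d f -> exists f', PD (pred d) f' /\
   (d = 0%nat -> forall t, f' t = 0) /\ forall t, is_derive f t (f' t).
Proof.
  induction 1.
  - exists (fun _ => 0). split; [|split]; auto. apply PDc. intros; apply dconst.
  - destruct IHPD1 as [f1 [A1 [B1 C1]]]; destruct IHPD2 as [g1 [A2 [B2 C2]]].
    exists (fun t => f1 t + g1 t). split; [|split].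
    + apply PDplus; auto.
    + intros E t; rewrite B1, B2; auto; ring.
    + intros; apply dplus; auto.
  - destruct IHPD as [f1 [A1 [B1 C1]]].
    exists (fun t => a * f1 t). split; [|split].
    + apply PDscal; auto.
    + intros E t; rewrite B1; auto; ring.
    + intros; apply dscal; auto.
  - destruct IHPD as [f1 [A1 [B1 C1]]].
    exists (fun t => f t + t * f1 t). split; [|split].
    + simpl. destruct d.
      * apply PDext with f; auto. intros; rewrite B1; auto; ring.
      * apply PDplus; auto. apply PDx; auto.
    + intros E; discriminate.
    + intros t. eapply dext. apply dmult. apply did. apply C1. reflexivity. simpl; ring.
  - destruct IHPD as [f1 [A1 [B1 C1]]].
    exists f1. split; [|split]; auto.
    + simpl. apply PD_le with (pred d); auto. lia.
    + intros; discriminate.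
  - destruct IHPD as [f1 [A1 [B1 C1]]].
    exists f1. split; [|split]; auto.
    intros t. eapply dext. apply C1. auto. auto.
Qed.

Lemma PD_bound d f : PD d f -> exists C, forall t, -1 <= t <= 1 -> Rabs (f t) <= C.
Proof.
  induction 1.
  - exists (Rabs c); intros; lra.
  - destruct IHPD1 as [C1 H1]; destruct IHPD2 as [C2 H2]. exists (C1 + C2); intros.
    eapply Rle_trans. apply Rabs_triang. specialize (H1 t H3); specialize (H2 t H3); lra.
  - destruct IHPD as [C1 H1]. exists (Rabs a * C1); intros. rewrite Rabs_mult.
    apply Rmult_le_compat_l. apply Rabs_pos. auto.
  - destruct IHPD as [C1 H1]. exists C1; intros. rewrite Rabs_mult.
    specialize (H1 t H0). assert (Rabs t <= 1) by (apply Rabs_le; lra).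
    assert (0 <= Rabs (f t)) by apply Rabs_pos.
    nra.
  - auto.
  - destruct IHPD as [C1 H1]. exists C1; intros. rewrite <- H0; auto.
Qed.

Lemma PD_zeros k : forall p z, PD k p -> (forall i, (i < k)%nat -> z i < z (S i)) ->
  (forall i, (i <= k)%nat -> p (z i) = 0) -> forall t, p t = 0.
Proof.
  induction k; intros p z Hp Hz H0 t.
  - destruct (PD0_const p Hp) as [c Hc]. rewrite Hc. rewrite <- (Hc (z 0%nat)). apply H0; lia.
  - destruct (PD_deriv _ _ Hp) as [p' [Ap [_ Cp]]]. simpl in Ap.
    assert (Hw : forall i, exists w, (i < S k)%nat -> z i < w < z (S i) /\ p' w = 0).
    { intros i. destruct (Nat.lt_ge_cases i (S k)) as [Hi|Hi].
      - destruct (rolle_d p p' (z i) (z (S i))) as [w [Hw1 Hw2]]; auto.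
        rewrite !H0; auto; lia.
        exists w; auto.
      - exists 0; intros; lia. }
    destruct (functional_choice _ Hw) as [w Hwf].
    assert (Hp0 : forall u, p' u = 0).
    { apply IHk with w; auto.
      - intros i Hi. destruct (Hwf i) as [[_ A] _]; try lia.
        destruct (Hwf (S i)) as [[B _] _]; try lia. lra.
      - intros i Hi. apply (Hwf i); lia. }
    destruct (mvt_d p p' (z 0%nat) t Cp) as [c [_ Hc]].
    rewrite Hp0 in Hc. rewrite H0 in Hc; try lia. lra.
Qed.

Lemma PD_pow k : PD k (fun t => t ^ k).
Proof.
  induction k.
  - apply PDext with (fun _ => 1). apply PDc. intros; simpl; auto.
  - apply PDext with (fun t => t * t ^ k). apply PDx; auto. intros; simpl; auto.
Qed.

Lemma PD_sum (p : nat -> R) r : PD r (fun x => sum_f_R0 (fun k => p k * x ^ k) r).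
Proof.
  induction r.
  - simpl. apply PDscal. apply PD_pow.
  - simpl. apply PDplus. apply PDlift; auto. apply PDscal. apply PD_pow.
Qed.

Inductive TP : nat -> (R -> R) -> Prop :=
| TPc d c : TP d (fun _ => c)
| TPplus d f g : TP d f -> TP d g -> TP d (fun t => f t + g t)
| TPscal d a f : TP d f -> TP d (fun t => a * f t)
| TPcos d f : TP d f -> TP (S d) (fun t => cos t * f t)
| TPsin d f : TP d f -> TP (S d) (fun t => sin t * f t)
| TPlift d f : TP d f -> TP (S d) f
| TPext d f g : TP d f -> (forall t, f t = g t) -> TP d g.

Lemma TP_le d d' f : TP d f -> (d <= d')%nat -> TP d' f.
Proof. intros H Hle. induction Hle; auto. apply TPlift; auto. Qed.

Lemma TP_minus d f g : TP d f -> TP d g -> TP d (fun t => f t - g t).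
Proof.
  intros. apply TPext with (fun t => f t + (-1) * g t). apply TPplus; auto. apply TPscal; auto.
  intros; ring.
Qed.

Lemma TP_deriv d f : TP d f -> exists f', TP d f' /\ forall t, is_derive f t (f' t).
Proof.
  induction 1.
  - exists (fun _ => 0). split. apply TPc. intros; apply dconst.
  - destruct IHTP1 as [f1 [A1 C1]]; destruct IHTP2 as [g1 [A2 C2]].
    exists (fun t => f1 t + g1 t). split. apply TPplus; auto. intros; apply dplus; auto.
  - destruct IHTP as [f1 [A1 C1]].
    exists (fun t => a * f1 t). split. apply TPscal; auto. intros; apply dscal; auto.
  - destruct IHTP as [f1 [A1 C1]].
    exists (fun t => (-1) * (sin t * f t) + cos t * f1 t). split.
    + apply TPplus. apply TPscal. apply TPsin; auto. apply TPcos; auto.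
    + intros t. eapply dext. apply dmult. apply dcos. apply C1. reflexivity. ring.
  - destruct IHTP as [f1 [A1 C1]].
    exists (fun t => cos t * f t + sin t * f1 t). split.
    + apply TPplus. apply TPcos; auto. apply TPsin; auto.
    + intros t. eapply dext. apply dmult. apply dsin. apply C1. reflexivity. ring.
  - destruct IHTP as [f1 [A1 C1]]. exists f1. split; auto. apply TPlift; auto.
  - destruct IHTP as [f1 [A1 C1]]. exists f1. split; auto.
    intros t. eapply dext. apply C1. auto. auto.
Qed.

Lemma TP_cont d f : TP d f -> forall x, continuity_pt f x.
Proof.
  intros H x. destruct (TP_deriv d f H) as [f' [_ Hd]]. apply (deriv_cont f (f' x)); auto.
Qed.

Lemma TP_continuity d f : TP d f -> continuity f.
Proof. intros H x. apply (TP_cont d f H). Qed.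

Lemma TP_shift d f a : TP d f -> TP d (fun x => f (x + a)).
Proof.
  induction 1.
  - apply TPc.
  - apply TPplus; auto.
  - apply TPscal; auto.
  - apply TPext with (fun x => cos a * (cos x * f (x + a)) + (- sin a) * (sin x * f (x + a))).
    apply TPplus; apply TPscal. apply TPcos; auto. apply TPsin; auto.
    intros; rewrite cos_plus; ring.
  - apply TPext with (fun x => cos a * (sin x * f (x + a)) + sin a * (cos x * f (x + a))).
    apply TPplus; apply TPscal. apply TPsin; auto. apply TPcos; auto.
    intros; rewrite sin_plus; ring.
  - apply TPlift; auto.
  - apply TPext with (fun x => f (x + a)); auto.
Qed.

Lemma TP_cossin k : TP k (fun x => cos (INR k * x)) /\ TP k (fun x => sin (INR k * x)).
Proof.
  induction k.
  - split.
    + apply TPext with (fun _ => 1). apply TPc. intros; simpl; rewrite Rmult_0_l, cos_0; auto.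
    + apply TPext with (fun _ => 0). apply TPc. intros; simpl; rewrite Rmult_0_l, sin_0; auto.
  - destruct IHk as [Hc Hs]. split.
    + apply TPext with (fun x => cos x * cos (INR k * x) + (-1) * (sin x * sin (INR k * x))).
      apply TPplus. apply TPcos; auto. apply TPscal. apply TPsin; auto.
      intros. rewrite S_INR. replace ((INR k + 1) * t) with (t + INR k * t) by ring.
      rewrite cos_plus; ring.
    + apply TPext with (fun x => sin x * cos (INR k * x) + cos x * sin (INR k * x)).
      apply TPplus. apply TPsin; auto. apply TPcos; auto.
      intros. rewrite S_INR. replace ((INR k + 1) * t) with (t + INR k * t) by ring.
      rewrite sin_plus; ring.
Qed.

Lemma half_cos th : -PI < th < PI ->
  cos th * (1 + tan (th/2) ^ 2) = 1 - tan (th/2) ^ 2.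
Proof.
  intros H. assert (Hc : 0 < cos (th/2)) by (apply cos_gt_0; lra).
  replace th with (2 * (th/2)) at 1 by field. rewrite cos_2a. unfold tan.
  pose proof (sin2_cos2 (th/2)). unfold Rsqr in H0.
  replace (1 + (sin (th / 2) / cos (th / 2)) ^ 2) with
     ((sin (th / 2) * sin (th / 2) + cos (th / 2) * cos (th / 2)) / (cos (th/2) * cos (th/2)))
   by (field; lra).
  rewrite H0. field. lra.
Qed.

Lemma half_sin th : -PI < th < PI ->
  sin th * (1 + tan (th/2) ^ 2) = 2 * tan (th/2).
Proof.
  intros H. assert (Hc : 0 < cos (th/2)) by (apply cos_gt_0; lra).
  replace th with (2 * (th/2)) at 1 by field. rewrite sin_2a. unfold tan.
  pose proof (sin2_cos2 (th/2)). unfold Rsqr in H0.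
  replace (1 + (sin (th / 2) / cos (th / 2)) ^ 2) with
     ((sin (th / 2) * sin (th / 2) + cos (th / 2) * cos (th / 2)) / (cos (th/2) * cos (th/2)))
   by (field; lra).
  rewrite H0. field. lra.
Qed.

Lemma PD_1pt2 d p : PD d p -> PD (S (S d)) (fun t => (1 + t^2) * p t).
Proof.
  intros H. apply PDext with (fun t => p t + t * (t * p t)).
  apply PDplus. apply PD_le with d; auto. apply PDx. apply PDx. auto.
  intros; ring.
Qed.
Lemma PD_1mt2 d p : PD d p -> PD (S (S d)) (fun t => (1 - t^2) * p t).
Proof.
  intros H. apply PDext with (fun t => p t + (-1) * (t * (t * p t))).
  apply PDplus. apply PD_le with d; auto. apply PDscal. apply PDx. apply PDx. auto.
  intros; ring.
Qed.
Lemma PD_2t d p : PD d p -> PD (S (S d)) (fun t => (2 * t) * p t).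
Proof.
  intros H. apply PDext with (fun t => 2 * (t * p t)).
  apply PDscal. apply PDlift. apply PDx. auto.
  intros; ring.
Qed.

Lemma TP_tan d f : TP d f -> exists p, PD (2 * d) p /\
  forall th, -PI < th < PI -> f th * (1 + tan (th/2) ^ 2) ^ d = p (tan (th/2)).
Proof.
  induction 1.
  - exists (fun t => c * (1 + t^2) ^ d). split.
    + apply PDscal. clear. induction d. simpl. apply PDc.
      replace (2 * S d)%nat with (S (S (2 * d))) by lia.
      apply PDext with (fun t => (1 + t^2) * (1 + t^2)^d). apply PD_1pt2; auto.
      intros; simpl; ring.
    + intros; auto.
  - destruct IHTP1 as [p1 [A1 B1]]; destruct IHTP2 as [p2 [A2 B2]].
    exists (fun t => p1 t + p2 t). split. apply PDplus; auto.
    intros. rewrite <- B1, <- B2; auto; ring.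
  - destruct IHTP as [p1 [A1 B1]].
    exists (fun t => a * p1 t). split. apply PDscal; auto.
    intros. rewrite <- B1; auto; ring.
  - destruct IHTP as [p1 [A1 B1]].
    exists (fun t => (1 - t^2) * p1 t). split.
    replace (2 * S d)%nat with (S (S (2 * d))) by lia. apply PD_1mt2; auto.
    intros. rewrite <- B1; auto. rewrite <- half_cos; auto. simpl; ring.
  - destruct IHTP as [p1 [A1 B1]].
    exists (fun t => (2 * t) * p1 t). split.
    replace (2 * S d)%nat with (S (S (2 * d))) by lia. apply PD_2t; auto.
    intros. rewrite <- B1; auto. rewrite <- half_sin; auto. simpl; ring.
  - destruct IHTP as [p1 [A1 B1]].
    exists (fun t => (1 + t^2) * p1 t). split.
    replace (2 * S d)%nat with (S (S (2 * d))) by lia. apply PD_1pt2; auto.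
    intros. rewrite <- B1; auto. simpl; ring.
  - destruct IHTP as [p1 [A1 B1]]. exists p1. split; auto.
    intros. rewrite <- H0; auto.
Qed.

Lemma TP_zeros d f z : TP d f ->
  (forall i, (i < 2 * d)%nat -> z i < z (S i)) ->
  (forall i, (i <= 2 * d)%nat -> -PI < z i < PI /\ f (z i) = 0) ->
  forall th, -PI < th < PI -> f th = 0.
Proof.
  intros Hf Hz H0 th Hth.
  destruct (TP_tan d f Hf) as [p [Hp Hpf]].
  assert (Hp0 : forall t, p t = 0).
  { apply PD_zeros with (2 * d)%nat (fun i => tan (z i / 2)); auto.
    - intros i Hi. assert (A := H0 i ltac:(lia)). assert (B := H0 (S i) ltac:(lia)).
      specialize (Hz i Hi). apply tan_increasing; lra.
    - intros i Hi. destruct (H0 i Hi) as [A B]. rewrite <- Hpf; auto. rewrite B; ring. }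
  specialize (Hpf th Hth). rewrite Hp0 in Hpf.
  assert (0 < (1 + tan (th/2) ^ 2) ^ d). { apply pow_lt. nra. }
  apply Rmult_integral in Hpf. destruct Hpf; auto. lra.
Qed.

Lemma TP_alg d f : TP d f -> TP d f.
Proof. auto. Qed.

Lemma IVT_strict (g : R -> R) (a b : R) : continuity g -> a < b -> g a * g b < 0 ->
  exists z, a < z < b /\ g z = 0.
Proof.
  intros Hc Hab Hs.
  destruct (Rlt_or_le (g a) 0) as [Ha|Ha].
  - assert (0 < g b) by nra.
    destruct (IVT g a b Hc Hab Ha H) as [z [Hz1 Hz2]].
    exists z; split; auto. split.
    + destruct (Req_dec z a); [subst; lra|lra].
    + destruct (Req_dec z b); [subst; lra|lra].
  - assert (g b < 0) by nra. assert (0 < g a) by nra.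
    assert (Hc' : continuity (fun x => - g x)) by (apply continuity_opp; auto).
    destruct (IVT (fun x => - g x) a b Hc' Hab ltac:(lra) ltac:(lra)) as [z [Hz1 Hz2]].
    exists z; split; [|lra]. split.
    + destruct (Req_dec z a); [subst; lra|lra].
    + destruct (Req_dec z b); [subst; lra|lra].
Qed.

Lemma deriv_neg_local (g : R -> R) (x l a b : R) : is_derive g x l -> l < 0 -> a < x < b ->
  (exists y1, a < y1 < x /\ g x < g y1) /\ (exists y2, x < y2 < b /\ g y2 < g x).
Proof.
  intros Hd Hl Hab. apply is_derive_Reals in Hd.
  destruct (Hd (- l / 2) ltac:(lra)) as [del Hdel].
  pose proof (cond_pos del) as Hdp.
  split.
  - set (h := - Rmin (del / 2) ((x - a) / 2)).
    assert (Hh1 : h < 0) by (unfold h; apply Ropp_lt_gt_0_contravar; apply Rmin_glb_lt; lra).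
    assert (Hh2 : Rabs h < del).
    { rewrite Rabs_left; auto. unfold h. rewrite Ropp_involutive.
      apply Rle_lt_trans with (del/2). apply Rmin_l. lra. }
    specialize (Hdel h ltac:(lra) Hh2).
    assert (Hx : -h <= (x - a) / 2) by (unfold h; rewrite Ropp_involutive; apply Rmin_r).
    exists (x + h). split. lra.
    apply Rabs_def2 in Hdel. destruct Hdel as [H1 H2].
    assert (Q : (g (x + h) - g x) / h < 0) by lra.
    assert (0 < (g (x + h) - g x) / h * h) by nra.
    replace (g (x + h)) with (((g (x + h) - g x) / h * h) + g x) by (field; lra). lra.
  - set (h := Rmin (del / 2) ((b - x) / 2)).
    assert (Hh1 : 0 < h) by (unfold h; apply Rmin_glb_lt; lra).
    assert (Hh2 : Rabs h < del).
    { rewrite Rabs_right; try lra. unfold h.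
      apply Rle_lt_trans with (del/2). apply Rmin_l. lra. }
    specialize (Hdel h ltac:(lra) Hh2).
    assert (Hx : h <= (b - x) / 2) by (unfold h; apply Rmin_r).
    exists (x + h). split. lra.
    apply Rabs_def2 in Hdel. destruct Hdel as [H1 H2].
    assert (Q : (g (x + h) - g x) / h < 0) by lra.
    assert (0 > (g (x + h) - g x) / h * h) by nra.
    replace (g (x + h)) with (((g (x + h) - g x) / h * h) + g x) by (field; lra). lra.
Qed.

Lemma sin_jpi j : sin (INR j * PI - PI / 2) = - (-1) ^ j.
Proof.
  induction j.
  - simpl. replace (0 * PI - PI / 2) with (- (PI/2)) by ring. rewrite sin_neg, sin_PI2. ring.
  - rewrite S_INR. replace ((INR j + 1) * PI - PI / 2) with ((INR j * PI - PI / 2) + PI) by ring.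
    rewrite neg_sin, IHj. simpl. ring.
Qed.

Lemma pm1 j : (-1) ^ j = 1 \/ (-1) ^ j = -1.
Proof. induction j; simpl; [left; ring|destruct IHj as [E|E]; rewrite E; [right|left]; ring]. Qed.

Lemma TP_sin_aff D c : TP D (fun x => sin (INR D * x + c)).
Proof.
  destruct (TP_cossin D) as [Hc Hs].
  apply TPext with (fun x => cos c * sin (INR D * x) + sin c * cos (INR D * x)).
  apply TPplus; apply TPscal; auto.
  intros; rewrite sin_plus; ring.
Qed.

Lemma incr_ge0 (Z : nat -> R) : (forall i, Z i < Z (S i)) -> forall i, Z 0%nat <= Z i.
Proof. intros H i. induction i. lra. specialize (H i). lra. Qed.

Lemma bern_core (D : nat) (f df : R -> R) : (1 <= D)%nat -> TP D f -> (forall x, is_derive f x (df x)) ->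
  (forall x, Rabs (f x) < 1) -> forall x0, df x0 <= INR D.
Proof.
  intros HD Hf Hdf Hb x0. apply Rnot_lt_le; intro Hgt.
  set (v := f x0). assert (Hv : -1 < v < 1) by (pose proof (Hb x0) as HH; unfold v; apply Rabs_def2 in HH; lra).
  set (phi := asin v).
  assert (Hsphi : sin phi = v) by (apply sin_asin; lra).
  assert (Hphi : - (PI/2) < phi < PI/2).
  { destruct (asin_bound v) as [A B]. fold phi in A, B. split.
    - destruct (Req_dec phi (- (PI/2))) as [E|E]; [|lra].
      rewrite E, sin_neg, sin_PI2 in Hsphi. lra.
    - destruct (Req_dec phi (PI/2)) as [E|E]; [|lra].
      rewrite E, sin_PI2 in Hsphi. lra. }
  set (DD := INR D). assert (Hgt' : DD < df x0) by exact Hgt. assert (HDD : 1 <= DD) by (unfold DD; apply (le_INR 1); auto).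
  set (c0 := phi - DD * x0).
  set (Sf := fun x => sin (DD * x + c0)).
  set (Del := fun x => Sf x - f x).
  assert (TPDel : TP D Del) by (apply TP_minus; [apply TP_sin_aff | auto]).
  assert (HdDel : is_derive Del x0 (DD * cos (DD * x0 + c0) - df x0)).
  { assert (HS : is_derive Sf x0 (DD * cos (DD * x0 + c0))).
    { unfold Sf. auto_derive; auto. ring. }
    apply dminus; auto. }
  assert (Hcphi : cos (DD * x0 + c0) <= 1) by apply COS_bound.
  replace (DD * x0 + c0) with phi in Hcphi by (unfold c0; ring).
  assert (Hcpos : 0 < cos phi) by (apply cos_gt_0; lra).
  assert (HDel0 : Del x0 = 0).
  { unfold Del, Sf. replace (DD * x0 + c0) with phi by (unfold c0; ring). rewrite Hsphi. unfold v; ring. }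
  set (e := fun j : nat => x0 + (INR j * PI - PI / 2 - phi) / DD).
  assert (He : forall j, Del (e j) = - (-1) ^ j - f (e j)).
  { intros j. unfold Del, Sf. replace (DD * e j + c0) with (INR j * PI - PI / 2).
    rewrite sin_jpi; auto. unfold e, c0. field. lra. }
  assert (Hestep : forall j, e (S j) = e j + PI / DD).
  { intros j. unfold e. rewrite S_INR. field. lra. }
  assert (HPI := PI_RGT_0).
  assert (Hmono : forall j, e j < e (S j)).
  { intros j. rewrite Hestep. assert (0 < PI/DD) by (apply Rdiv_lt_0_compat; lra). lra. }
  assert (Hemono : forall i j, (i <= j)%nat -> e i <= e j).
  { intros i j Hij. induction Hij. lra. specialize (Hmono m). lra. }
  assert (He2D : e (2 * D)%nat = e 0%nat + 2 * PI).
  { unfold e. rewrite mult_INR. fold DD. simpl (INR 2). simpl (INR 0). field. lra. }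
  assert (He0 : e 0%nat < x0).
  { unfold e. simpl (INR 0). assert ((0 * PI - PI / 2 - phi) / DD < 0).
    { apply Rdiv_neg_pos; lra. } lra. }
  assert (He1 : x0 < e 1%nat).
  { unfold e. simpl (INR 1). assert (0 < (1 * PI - PI / 2 - phi) / DD).
    { apply Rdiv_lt_0_compat; lra. } lra. }
  assert (HcontDel : continuity Del) by (apply (TP_continuity D); auto).
  assert (Hfb : forall x, -1 < f x < 1) by (intros x; pose proof (Hb x) as HH; apply Rabs_def2 in HH; lra).
  assert (Hsign : forall j, Del (e j) * Del (e (S j)) < 0).
  { intros j. rewrite !He. simpl ((-1) ^ S j). destruct (pm1 j) as [E|E]; rewrite E;
    pose proof (Hfb (e j)); pose proof (Hfb (e (S j))); nra. }
  assert (Hzj : forall j, exists z, e j < z < e (S j) /\ Del z = 0).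
  { intros j. apply IVT_strict; auto. }
  destruct (functional_choice _ Hzj) as [zj Hzjp].
  assert (Hdneg : DD * cos (DD * x0 + c0) - df x0 < 0).
  { replace (DD * x0 + c0) with phi by (unfold c0; ring). nra. }
  destruct (deriv_neg_local Del x0 _ (e 0%nat) (e 1%nat) HdDel Hdneg ltac:(lra))
    as [[y1 [Hy1 Hy1']] [y2 [Hy2 Hy2']]].
  rewrite HDel0 in Hy1', Hy2'.
  destruct (IVT_strict Del (e 0%nat) y1 HcontDel ltac:(lra)) as [za [Hza Hza']].
  { rewrite He. simpl. pose proof (Hfb (e 0%nat)). nra. }
  destruct (IVT_strict Del y2 (e 1%nat) HcontDel ltac:(lra)) as [zb [Hzb Hzb']].
  { rewrite He. simpl. pose proof (Hfb (e 1%nat)). nra. }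
  set (Z := fun i : nat => match i with 0%nat => za | 1%nat => x0 | 2%nat => zb
                          | S (S (S k)) => zj (S k) end).
  assert (HZinc : forall i, Z i < Z (S i)).
  { intros [|[|[|k]]]; simpl.
    - lra. - lra.
    - destruct (Hzjp 1%nat). lra.
    - destruct (Hzjp (S k)). destruct (Hzjp (S (S k))). lra. }
  assert (HZup : forall i, Z i < e (S (i - 2))).
  { intros [|[|[|k]]]; simpl; try lra. destruct (Hzjp (S k)); lra. }
  assert (HZ0 : forall i, Del (Z i) = 0).
  { intros [|[|[|k]]]; simpl; auto. apply Hzjp. }
  set (g := fun x => Del (x + (e 0%nat + PI))).
  assert (TPg : TP D g) by (apply TP_shift; auto).
  assert (Hg0 : forall th, -PI < th < PI -> g th = 0).
  { apply (TP_zeros D g (fun i => Z i - (e 0%nat + PI))); auto.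
    - intros i _. specialize (HZinc i). lra.
    - intros i Hi. split.
      + split.
        * pose proof (incr_ge0 Z HZinc i). simpl in H. lra.
        * pose proof (HZup i). pose proof (Hemono (S (i - 2)) (2 * D)%nat ltac:(lia)). lra.
      + unfold g. replace (Z i - (e 0%nat + PI) + (e 0%nat + PI)) with (Z i) by ring. auto. }
  specialize (Hg0 (e 1%nat - (e 0%nat + PI))).
  unfold g in Hg0. replace (e 1%nat - (e 0%nat + PI) + (e 0%nat + PI)) with (e 1%nat) in Hg0 by ring.
  rewrite He in Hg0. simpl in Hg0. pose proof (Hfb (e 1%nat)).
  assert (Hpd : 0 < PI / DD <= PI).
  { split. apply Rdiv_lt_0_compat; lra. apply Rmult_le_reg_r with DD. lra.
    unfold Rdiv. rewrite Rmult_assoc, Rinv_l; nra. }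
  rewrite (Hestep 0%nat) in Hg0. 
  assert (-PI < e 0%nat + PI / DD - (e 0%nat + PI) < PI) by lra.
  specialize (Hg0 H0). pose proof (Hfb (e 0%nat + PI / DD)). lra.
Qed.

Lemma bernstein (D : nat) (f df : R -> R) (M : R) : (1 <= D)%nat -> TP D f -> (forall x, is_derive f x (df x)) ->
  (forall x, Rabs (f x) <= M) -> forall x, Rabs (df x) <= INR D * M.
Proof.
  intros HD Hf Hdf Hb x.
  assert (HM : 0 <= M) by (pose proof (Hb 0); pose proof (Rabs_pos (f 0)); lra).
  assert (HDD : 1 <= INR D) by (apply (le_INR 1); auto).
  assert (key : forall M', M < M' -> Rabs (df x) <= INR D * M').
  { intros M' HM'.
    assert (A : forall s, s = 1 \/ s = -1 -> s * df x / M' <= INR D).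
    { intros s Hs. apply (bern_core D (fun y => s * f y / M') (fun y => s * df y / M')); auto.
      - apply TPext with (fun y => (s / M') * f y). apply TPscal; auto. intros; field; lra.
      - intros y. eapply dext. apply dscal with (k := s / M'). apply Hdf. intros; cbv beta; field; lra.
        field; lra.
      - intros y. unfold Rdiv. rewrite !Rabs_mult. rewrite Rabs_inv.
        rewrite (Rabs_right M') by lra.
        assert (Rabs s = 1) by (destruct Hs; subst; [apply Rabs_R1|rewrite Rabs_left; lra]).
        rewrite H. specialize (Hb y). apply Rmult_lt_reg_r with M'. lra.
        rewrite Rmult_assoc, Rinv_l by lra. lra. }
    pose proof (A 1 (or_introl eq_refl)). pose proof (A (-1) (or_intror eq_refl)).
    apply Rmult_le_compat_r with (r := M') in H; [|lra]. apply Rmult_le_compat_r with (r := M') in H0; [|lra].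
    unfold Rdiv in H, H0. rewrite Rmult_assoc, Rinv_l in H, H0 by lra.
    apply Rabs_le. lra. }
  apply Rnot_lt_le. intro Hc.
  set (M' := M + (Rabs (df x) - INR D * M) / (2 * INR D)).
  assert (M < M') by (unfold M'; assert (0 < (Rabs (df x) - INR D * M) / (2 * INR D)) by (apply Rdiv_lt_0_compat; lra); lra).
  specialize (key M' H). unfold M' in key.
  assert (INR D * (M + (Rabs (df x) - INR D * M) / (2 * INR D)) = (INR D * M + Rabs (df x))/2) by (field; lra).
  lra.
Qed.

Lemma sin_ge z : 0 <= z <= 2 -> z - z^3/6 <= sin z.
Proof.
  intros Hz. assert (HP : 3/2 < PI/2) by apply PI2_3_2.
  destruct (SIN z ltac:(lra) ltac:(lra)) as [A _].
  eapply Rle_trans; [|exact A].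
  assert (B : 0 <= z^5 * (42 - z^2)) by (apply Rmult_le_pos; [apply pow_le; lra| nra]).
  unfold sin_lb, sin_approx, sin_term. simpl. lra.
Qed.

Definition X (s th : R) := 2 * asin (s * sin th).

Lemma ssin_bound s th : 0 < s < 1 -> -s <= s * sin th <= s.
Proof. intros Hs. pose proof (SIN_bound th). split; nra. Qed.

Lemma X_half s th : X s th / 2 = asin (s * sin th).
Proof. unfold X; field. Qed.

Lemma X_sin2 s th : 0 < s < 1 -> sin (X s th / 2) = s * sin th.
Proof. intros Hs. rewrite X_half. apply sin_asin. pose proof (ssin_bound s th Hs). lra. Qed.

Lemma X_cos2 s th : 0 < s < 1 -> 0 < cos (X s th / 2) /\ cos (X s th / 2) ^ 2 = 1 - (s * sin th) ^ 2.
Proof.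
  intros Hs. rewrite X_half. pose proof (ssin_bound s th Hs).
  rewrite cos_asin by lra. assert (0 < 1 - (s * sin th)²) by (unfold Rsqr; nra).
  split. apply sqrt_lt_R0; auto. simpl. rewrite Rmult_1_r. rewrite sqrt_sqrt by lra. unfold Rsqr; ring.
Qed.

Lemma X_cos s th : 0 < s < 1 -> cos (X s th) = 1 - 2 * (s * sin th) ^ 2.
Proof.
  intros Hs. replace (X s th) with (2 * (X s th / 2)) by field. rewrite cos_2a_sin.
  rewrite X_sin2; auto. ring.
Qed.

Lemma X_sin s th : 0 < s < 1 -> sin (X s th) = 2 * (s * sin th) * cos (X s th / 2).
Proof.
  intros Hs. replace (X s th) with (2 * (X s th / 2)) at 1 by field. rewrite sin_2a.
  rewrite X_sin2; auto.
Qed.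

Lemma X_opp s th : X s (- th) = - X s th.
Proof. unfold X. rewrite sin_neg. replace (s * - sin th) with (- (s * sin th)) by ring. rewrite asin_opp. ring. Qed.

Lemma TP_sinmul m G : TP m G -> TP (S m) (fun th => sin th * G th).
Proof. apply TPsin. Qed.

Lemma TP_kappa s m G : TP m G -> TP (S (S m)) (fun th => (1 - 2 * (s * sin th) ^ 2) * G th).
Proof.
  intros H. apply TPext with (fun th => G th + (- 2 * s ^ 2) * (sin th * (sin th * G th))).
  apply TPplus. apply TP_le with m; auto. apply TPscal. apply TPsin. apply TPsin. auto.
  intros; ring.
Qed.

Lemma TP_sin3 s m G : TP m G -> TP (S (S (S m))) (fun th => (2 * (s * sin th) * (1 - (s * sin th) ^ 2)) * G th).
Proof.
  intros H. apply TPext with (fun th => (2 * s) * (sin th * G th) + (- 2 * s ^ 3) * (sin th * (sin th * (sin th * G th)))).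
  apply TPplus. apply TP_le with (S m); [|lia]. apply TPscal. apply TPsin; auto.
  apply TPscal. apply TPsin. apply TPsin. apply TPsin. auto.
  intros; ring.
Qed.

Lemma TP_2s s m G : TP m G -> TP (S m) (fun th => (2 * (s * sin th)) * G th).
Proof.
  intros H. apply TPext with (fun th => (2 * s) * (sin th * G th)).
  apply TPscal. apply TPsin; auto. intros; ring.
Qed.

Lemma decomp s d f : 0 < s < 1 -> TP d f -> exists G H, TP (3 * d) G /\ TP (3 * d) H /\
  (forall th, G (- th) = G th) /\ (forall th, H (- th) = - H th) /\
  forall th, f (X s th) = G th + cos (X s th / 2) * H th.
Proof.
  intros Hs Hf. induction Hf.
  - exists (fun _ => c), (fun _ => 0). repeat split; try apply TPc; intros; ring.
  - destruct IHHf1 as [G1 [H1 [A1 [B1 [C1 [D1 E1]]]]]].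
    destruct IHHf2 as [G2 [H2 [A2 [B2 [C2 [D2 E2]]]]]].
    exists (fun t => G1 t + G2 t), (fun t => H1 t + H2 t).
    repeat split; try (apply TPplus; auto); intros.
    rewrite C1, C2; auto. rewrite D1, D2; ring. rewrite E1, E2; ring.
  - destruct IHHf as [G1 [H1 [A1 [B1 [C1 [D1 E1]]]]]].
    exists (fun t => a * G1 t), (fun t => a * H1 t).
    repeat split; try (apply TPscal; auto); intros.
    rewrite C1; auto. rewrite D1; ring. rewrite E1; ring.
  - destruct IHHf as [G1 [H1 [A1 [B1 [C1 [D1 E1]]]]]].
    exists (fun t => (1 - 2 * (s * sin t) ^ 2) * G1 t), (fun t => (1 - 2 * (s * sin t) ^ 2) * H1 t).
    repeat split.
    + apply TP_le with (S (S (3 * d))); [apply TP_kappa; auto|lia].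
    + apply TP_le with (S (S (3 * d))); [apply TP_kappa; auto|lia].
    + intros. rewrite C1, sin_neg. ring.
    + intros. rewrite D1, sin_neg. ring.
    + intros. rewrite E1, X_cos; auto. ring.
  - destruct IHHf as [G1 [H1 [A1 [B1 [C1 [D1 E1]]]]]].
    exists (fun t => (2 * (s * sin t) * (1 - (s * sin t) ^ 2)) * H1 t), (fun t => (2 * (s * sin t)) * G1 t).
    repeat split.
    + replace (3 * S d)%nat with (S (S (S (3 * d)))) by lia. apply TP_sin3; auto.
    + apply TP_le with (S (3 * d)); [apply TP_2s; auto|lia].
    + intros. rewrite D1, sin_neg. ring.
    + intros. rewrite C1, sin_neg. ring.
    + intros th. rewrite E1, X_sin; auto. destruct (X_cos2 s th Hs) as [_ E]. rewrite <- E. ring.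
  - destruct IHHf as [G1 [H1 [A1 [B1 [C1 [D1 E1]]]]]].
    exists G1, H1. repeat split; auto; apply TP_le with (3 * d)%nat; auto; lia.
  - destruct IHHf as [G1 [H1 [A1 [B1 [C1 [D1 E1]]]]]].
    exists G1, H1. repeat split; auto. intros; rewrite <- H; auto.
Qed.

Lemma asin_small y : 0 <= y <= 3/5 -> 0 <= asin y <= 2 * y.
Proof.
  intros Hy. set (z := asin y). assert (Hs : sin z = y) by (apply sin_asin; lra).
  destruct (asin_bound y) as [A B]. fold z in A, B.
  pose proof PI_4. pose proof PI_RGT_0.
  assert (Hz0 : 0 <= z).
  { destruct (Rle_or_lt 0 z) as [Hq|Hq]; auto. exfalso.
    assert (Hq2 : 0 < sin (- z)) by (apply sin_gt_0; lra). rewrite sin_neg in Hq2. lra. }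
  split; auto.
  assert (Hz2 : z <= 2) by lra.
  pose proof (sin_ge z ltac:(lra)) as Hg. rewrite Hs in Hg.
  destruct (Rle_or_lt (z^2) 3) as [Hq|Hq].
  - assert (z * (1/2 - z^2/6) >= 0) by (apply Rle_ge; apply Rmult_le_pos; lra). nra.
  - exfalso. assert (0 <= (2 - z) * (z^2 + 2 * z - 2)) by (apply Rmult_le_pos; nra). nra.
Qed.

Lemma loc_bern n f M b0 : (1 <= n)%nat -> TP n f -> 0 < b0 <= PI/2 ->
  (forall x, -b0 <= x <= b0 -> Rabs (f x) <= M) ->
  forall t, 0 <= t <= b0/2 -> Rabs (f t - f 0) <= 36 * INR n * M * t / b0.
Proof.
  intros Hn Hf Hb0 HM t Ht.
  pose proof PI_4. pose proof PI_RGT_0.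
  set (s := sin (b0/2)).
  assert (Hs0 : 0 < s) by (apply sin_gt_0; lra).
  assert (Hs2 : s ^ 2 <= 1/2).
  { assert (s <= sin (PI/4)) by (apply sin_incr_1; lra).
    rewrite sin_PI4 in H1. assert (0 < sqrt 2) by (apply sqrt_lt_R0; lra).
    assert (sqrt 2 * sqrt 2 = 2) by (apply sqrt_sqrt; lra).
    assert (s * sqrt 2 <= 1). { apply Rmult_le_reg_r with (/ sqrt 2). apply Rinv_0_lt_compat; lra.
      rewrite Rmult_assoc, Rinv_r, Rmult_1_l, Rmult_1_r by lra. lra. }
    nra. }
  assert (Hs : 0 < s < 1) by nra.
  destruct (decomp s n f Hs Hf) as [G [K [TG [TH [EG [OH Ef]]]]]].
  assert (HX : forall th, -b0 <= X s th <= b0).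
  { intros th. unfold X. pose proof (ssin_bound s th Hs). destruct (asin_bound (s * sin th)).
    assert (E1 : sin (asin (s * sin th)) = s * sin th) by (apply sin_asin; lra).
    split.
    - assert (- (b0/2) <= asin (s * sin th)); [|lra].
      apply sin_incr_0; try lra. rewrite E1, sin_neg. fold s. lra.
    - assert (asin (s * sin th) <= b0/2); [|lra].
      apply sin_incr_0; try lra. rewrite E1. fold s. lra. }
  assert (Hc : forall th, 1/2 <= cos (X s th / 2) <= 1).
  { intros th. destruct (X_cos2 s th Hs) as [A B]. pose proof (SIN_bound th).
    split; [|apply COS_bound].
    assert (Q1 : (s * sin th)^2 <= s^2).
    { rewrite Rpow_mult_distr. assert (sin th ^ 2 <= 1) by (simpl; nra).
      assert (0 <= s^2) by (apply pow2_ge_0). nra. }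
    assert (Q2 : cos (X s th / 2) ^ 2 >= 1/2) by lra.
    destruct (Rle_or_lt (1/2) (cos (X s th / 2))); auto. nra. }
  assert (Hfm : forall th, f (X s (- th)) = G th - cos (X s th / 2) * K th).
  { intros th. rewrite Ef, EG, OH. rewrite X_opp. replace (- X s th / 2) with (- (X s th / 2)) by field.
    rewrite cos_neg. ring. }
  assert (HGb : forall th, Rabs (G th) <= M).
  { intros th. replace (G th) with ((f (X s th) + f (X s (- th))) / 2) by (rewrite Ef, Hfm; field).
    pose proof (HM _ (HX th)). pose proof (HM _ (HX (- th))).
    unfold Rdiv. rewrite Rabs_mult. rewrite (Rabs_right (/2)) by lra.
    pose proof (Rabs_triang (f (X s th)) (f (X s (- th)))). lra. }
  assert (HHb : forall th, Rabs (K th) <= 2 * M).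
  { intros th. destruct (Hc th) as [C1 C2].
    assert (E : cos (X s th / 2) * K th = (f (X s th) - f (X s (- th))) / 2) by (rewrite Ef, Hfm; field).
    pose proof (HM _ (HX th)) as P1. pose proof (HM _ (HX (- th))) as P2.
    assert (P3 : Rabs (cos (X s th / 2) * K th) <= M).
    { rewrite E. unfold Rdiv. rewrite Rabs_mult. rewrite (Rabs_right (/2)) by lra.
      pose proof (Rabs_triang (f (X s th)) (- f (X s (- th)))) as P4. rewrite Rabs_Ropp in P4.
      unfold Rminus. lra. }
    rewrite Rabs_mult, (Rabs_right (cos _)) in P3 by lra.
    pose proof (Rabs_pos (K th)). nra. }
  destruct (TP_deriv _ G TG) as [G' [_ DG]].
  destruct (TP_deriv _ K TH) as [H' [_ DH]].
  assert (Hn3 : (1 <= 3 * n)%nat) by lia.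
  assert (BG := bernstein (3 * n) G G' M Hn3 TG DG HGb).
  assert (BH := bernstein (3 * n) K H' (2 * M) Hn3 TH DH HHb).
  rewrite mult_INR in BG, BH. simpl (INR 3) in BG, BH.
  assert (HM0 : 0 <= M) by (pose proof (HGb 0); pose proof (Rabs_pos (G 0)); lra).
  assert (HnR : 1 <= INR n) by (apply (le_INR 1); auto).
  set (y := sin (t/2) / s).
  assert (Hy1 : 0 <= sin (t/2)) by (apply sin_ge_0; lra).
  assert (Hy2 : sin (t/2) <= 3/5 * s).
  { assert (A : sin (t/2) <= sin (b0/4)) by (apply sin_incr_1; lra).
    assert (Bs : s = 2 * sin (b0/4) * cos (b0/4)).
    { unfold s. rewrite <- sin_2a. f_equal; field. }
    assert (Cc : 5/6 <= cos (b0/4)).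
    { replace (b0/4) with (2 * (b0/8)) by field. rewrite cos_2a_sin.
      destruct (Rle_or_lt (b0/8) 0). lra.
      pose proof (sin_lt_x (b0/8) H1). assert (0 <= sin (b0/8)) by (apply sin_ge_0; lra). nra. }
    assert (0 <= sin (b0/4)) by (apply sin_ge_0; lra). nra. }
  assert (Hy : 0 <= y <= 3/5).
  { unfold y. split. apply Rdiv_le_0_compat; lra.
    apply Rmult_le_reg_r with s; auto. unfold Rdiv. rewrite Rmult_assoc, Rinv_l by lra. lra. }
  set (tht := asin y).
  assert (Htht := asin_small y Hy). fold tht in Htht.
  assert (HXt : X s tht = t).
  { unfold X, tht. rewrite sin_asin by lra. unfold y.
    replace (s * (sin (t / 2) / s)) with (sin (t/2)) by (field; lra).
    rewrite asin_sin by lra. field. }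
  assert (HX0 : X s 0 = 0) by (unfold X; rewrite sin_0, Rmult_0_r, asin_0; ring).
  assert (HH0 : K 0 = 0) by (pose proof (OH 0); rewrite Ropp_0 in H1; lra).
  assert (Hdiff : f t - f 0 = (G tht - G 0) + cos (X s tht / 2) * (K tht - K 0)).
  { assert (F1 : f t = G tht + cos (X s tht / 2) * K tht) by (rewrite <- Ef, HXt; auto).
    assert (F0 : f 0 = G 0) by (rewrite <- HX0 at 1; rewrite Ef, HH0; ring).
    rewrite F1, F0, HH0. ring. }
  destruct (mvt_d G G' 0 tht DG) as [c1 [_ E1]].
  destruct (mvt_d K H' 0 tht DH) as [c2 [_ E2]].
  rewrite Hdiff, E1, E2.
  pose proof (BG c1). pose proof (BH c2). destruct (Hc tht).
  assert (Hsb : b0 / 4 <= s).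
  { unfold s. pose proof (sin_ge (b0/2) ltac:(lra)). assert ((b0/2)^2 <= 1) by nra. nra. }
  assert (Hyb : y <= 2 * t / b0).
  { unfold y. assert (sin (t/2) <= t/2).
    { destruct (Req_dec t 0) as [E|E]. rewrite E. replace (0/2) with 0 by field. rewrite sin_0. lra.
      left. apply sin_lt_x. lra. }
    apply Rmult_le_reg_r with s; auto. unfold Rdiv. rewrite Rmult_assoc, Rinv_l by lra.
    apply Rle_trans with (t/2). lra.
    apply Rle_trans with (2 * t * / b0 * (b0/4)). right. field. lra.
    apply Rmult_le_compat_l. apply Rmult_le_pos. lra. left; apply Rinv_0_lt_compat; lra. lra. }
  assert (Htb : tht <= 4 * t / b0).
  { assert (Q : 2 * (2 * t / b0) = 4 * t / b0) by (field; lra). lra. }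
  replace (tht - 0) with tht by ring.
  eapply Rle_trans. apply Rabs_triang. rewrite !Rabs_mult.
  rewrite (Rabs_right (cos _)) by lra. rewrite (Rabs_right tht) by lra.
  assert (Rabs (G' c1) * tht <= 3 * INR n * M * tht) by (apply Rmult_le_compat_r; lra).
  assert (Rabs (H' c2) * tht <= 3 * INR n * (2 * M) * tht) by (apply Rmult_le_compat_r; lra).
  assert (cos (X s tht / 2) * (Rabs (H' c2) * tht) <= 1 * (Rabs (H' c2) * tht)).
  { apply Rmult_le_compat_r; [apply Rmult_le_pos; [apply Rabs_pos|lra]|lra]. }
  assert (9 * INR n * M * tht <= 9 * INR n * M * (4 * t / b0)).
  { apply Rmult_le_compat_l; [|lra]. nra. }
  replace (36 * INR n * M * t / b0) with (9 * INR n * M * (4 * t / b0)) by (field; lra).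
  nra.
Qed.

Definition CT (f : R -> R) := forall x, continuous f x.

Lemma ct_plus (f g : R -> R) : CT f -> CT g -> CT (fun y => f y + g y).
Proof. intros Hf Hg x. apply (continuous_plus f g x (Hf x) (Hg x)). Qed.
Lemma ct_mult (f g : R -> R) : CT f -> CT g -> CT (fun y => f y * g y).
Proof. intros Hf Hg x. apply (continuous_mult f g x (Hf x) (Hg x)). Qed.
Lemma ct_const (c : R) : CT (fun _ => c).
Proof. intros x. apply continuous_const. Qed.
Lemma ct_scal (c : R) (f : R -> R) : CT f -> CT (fun y => c * f y).
Proof. intros Hf. apply ct_mult; auto. apply ct_const. Qed.
Lemma ct_minus (f g : R -> R) : CT f -> CT g -> CT (fun y => f y - g y).
Proof.
  intros Hf Hg x. apply (continuous_ext (fun y : R => f y + (-1) * g y) (fun y : R => f y - g y)).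
  intros; simpl; ring. apply ct_plus; auto. apply ct_scal; auto.
Qed.
Lemma ct_ext (f g : R -> R) : CT f -> (forall x, f x = g x) -> CT g.
Proof. intros Hf E x. apply (continuous_ext f g); auto. Qed.
Lemma ct_der (f df : R -> R) : (forall x, is_derive f x (df x)) -> CT f.
Proof. intros H x. apply continuity_pt_filterlim. apply (deriv_cont f (df x)). apply H. Qed.

Lemma exR (f : R -> R) (a b : R) : CT f -> ex_RInt f a b.
Proof. intros H. apply (ex_RInt_continuous (V:=R_CompleteNormedModule)). intros; apply H. Qed.

Lemma RInt_plusR (f g : R -> R) (a b : R) : CT f -> CT g ->
  RInt (fun x => f x + g x) a b = RInt f a b + RInt g a b.
Proof. intros Hf Hg. apply (RInt_plus f g a b (exR f a b Hf) (exR g a b Hg)). Qed.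
Lemma RInt_scalR (c : R) (f : R -> R) (a b : R) : CT f -> RInt (fun x => c * f x) a b = c * RInt f a b.
Proof. intros Hf. apply (RInt_scal f a b c (exR f a b Hf)). Qed.
Lemma RInt_minusR (f g : R -> R) (a b : R) : CT f -> CT g ->
  RInt (fun x => f x - g x) a b = RInt f a b - RInt g a b.
Proof. intros Hf Hg. apply (RInt_minus f g a b (exR f a b Hf) (exR g a b Hg)). Qed.
Lemma RInt_leR (f g : R -> R) (a b : R) : a <= b -> CT f -> CT g -> (forall x, a < x < b -> f x <= g x) ->
  RInt f a b <= RInt g a b.
Proof. intros Hab Hf Hg H. apply RInt_le; auto; apply exR; auto. Qed.
Lemma RInt_constR (c a b : R) : RInt (fun _ => c) a b = c * (b - a).
Proof. rewrite (RInt_const (V:=R_CompleteNormedModule)). exact (Rmult_comm (b - a) c). Qed.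
Lemma ChaslesR (f : R -> R) (a b c : R) : CT f -> RInt f a b + RInt f b c = RInt f a c.
Proof. intros Hf. apply (RInt_Chasles f a b c (exR f a b Hf) (exR f b c Hf)). Qed.
Lemma RInt_extR (f g : R -> R) (a b : R) : (forall x, Rmin a b < x < Rmax a b -> f x = g x) -> RInt f a b = RInt g a b.
Proof. apply RInt_ext. Qed.

Lemma RInt_abs_bound (f : R -> R) (a b M : R) : a <= b -> CT f -> (forall x, a < x < b -> Rabs (f x) <= M) ->
  Rabs (RInt f a b) <= M * (b - a).
Proof.
  intros Hab Hf H. apply Rabs_le.
  assert (A : RInt (fun _ => - M) a b <= RInt f a b).
  { apply RInt_leR; auto. apply ct_const. intros x Hx. specialize (H x Hx). apply Rabs_le_between in H. lra. }
  assert (B : RInt f a b <= RInt (fun _ => M) a b).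
  { apply RInt_leR; auto. apply ct_const. intros x Hx. specialize (H x Hx). apply Rabs_le_between in H. lra. }
  rewrite RInt_constR in A, B. split; lra.
Qed.

Lemma RInt_lower (f : R -> R) (a b a' b' m : R) : a <= a' -> a' <= b' -> b' <= b -> CT f ->
  (forall x, a < x < b -> 0 <= f x) -> (forall x, a' < x < b' -> m <= f x) ->
  m * (b' - a') <= RInt f a b.
Proof.
  intros H1 H2 H3 Hf Hp Hm.
  rewrite <- (ChaslesR f a a' b Hf), <- (ChaslesR f a' b' b Hf).
  assert (0 <= RInt f a a'). { rewrite <- (Rmult_0_l (a' - a)), <- RInt_constR. apply RInt_leR; auto. apply ct_const.
    intros; apply Hp; lra. }
  assert (0 <= RInt f b' b). { rewrite <- (Rmult_0_l (b - b')), <- RInt_constR. apply RInt_leR; auto. apply ct_const.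
    intros; apply Hp; lra. }
  assert (m * (b' - a') <= RInt f a' b'). { rewrite <- RInt_constR. apply RInt_leR; auto. apply ct_const. }
  lra.
Qed.

Lemma RInt_odd (f : R -> R) (b : R) : CT f -> (forall x, f (- x) = - f x) -> RInt f (- b) b = 0.
Proof.
  intros Hf Ho.
  assert (H1 := RInt_correct f (- b) b (exR f _ _ Hf)).
  set (I := RInt f (- b) b) in *.
  assert (H2 : is_RInt f (- b) (- (- b)) I) by (rewrite Ropp_involutive; auto).
  apply (is_RInt_comp_opp f b (- b) I) in H2.
  apply is_RInt_ext with (g := f) in H2.
  2: { intros x _. unfold opp; simpl. rewrite Ho. ring. }
  apply is_RInt_swap in H2. apply (is_RInt_unique (V:=R_CompleteNormedModule)) in H2.
  fold I in H2. unfold opp in H2; simpl in H2. lra.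
Qed.

Lemma RInt_even (f : R -> R) (b : R) : CT f -> (forall x, f (- x) = f x) -> RInt f (- b) 0 = RInt f 0 b.
Proof.
  intros Hf He.
  assert (H1 := RInt_correct f (- b) 0 (exR f _ _ Hf)).
  set (I := RInt f (- b) 0) in *.
  assert (H2 : is_RInt f (- b) (- 0) I) by (rewrite Ropp_0; auto).
  apply (is_RInt_comp_opp f b 0 I) in H2.
  apply is_RInt_ext with (g := fun x => - f x) in H2.
  2: { intros x _. unfold opp; simpl. rewrite He. auto. }
  apply (is_RInt_unique (V:=R_CompleteNormedModule)) in H2.
  assert (E : RInt (fun x => - f x) b 0 = - RInt f b 0).
  { rewrite (RInt_extR (fun x => - f x) (fun x => (-1) * f x)) by (intros; ring).
    rewrite RInt_scalR; auto. lra. }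
  rewrite E in H2.
  assert (E2 : RInt f b 0 = - RInt f 0 b).
  { pose proof (ChaslesR f 0 b 0 Hf). rewrite RInt_point in H. unfold zero in H; simpl in H. lra. }
  lra.
Qed.

Lemma ibp1 (f df g dg : R -> R) (a b : R) : (forall x, is_derive f x (df x)) -> (forall x, is_derive g x (dg x)) ->
  CT df -> CT dg -> g a = 0 -> g b = 0 ->
  RInt (fun x => f x * dg x) a b = - RInt (fun x => df x * g x) a b.
Proof.
  intros Hf Hg Cdf Cdg Ga Gb.
  assert (Cf := ct_der f df Hf). assert (Cg := ct_der g dg Hg).
  assert (H := is_RInt_derive (fun x => f x * g x) (fun x => df x * g x + f x * dg x) a b).
  assert (H' : is_RInt (fun x => df x * g x + f x * dg x) a b (minus (f b * g b) (f a * g a))).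
  { apply H. intros; apply dmult; auto. intros x _. apply ct_plus; apply ct_mult; auto. }
  apply (is_RInt_unique (V:=R_CompleteNormedModule)) in H'. rewrite Ga, Gb in H'. unfold minus, plus, opp in H'; simpl in H'.
  rewrite RInt_plusR in H'. lra. apply ct_mult; auto. apply ct_mult; auto.
Qed.

Lemma ibp m : forall (f g : nat -> R -> R) a b,
  (forall j x, (j < m)%nat -> is_derive (f j) x (f (S j) x)) -> CT (f m) ->
  (forall j x, (j < m)%nat -> is_derive (g j) x (g (S j) x)) -> CT (g m) ->
  (forall j, (j < m)%nat -> g j a = 0 /\ g j b = 0) ->
  RInt (fun x => f 0%nat x * g m x) a b = (-1) ^ m * RInt (fun x => f m x * g 0%nat x) a b.
Proof.
  induction m; intros f g a b Hf Cf Hg Cg Hz.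
  - simpl. rewrite Rmult_1_l. auto.
  - assert (Cfj : forall j, (j <= S m)%nat -> CT (f j)).
    { intros j Hj. destruct (Nat.eq_dec j (S m)). subst; auto.
      apply ct_der with (f (S j)). intros; apply Hf; lia. }
    assert (Cgj : forall j, (j <= S m)%nat -> CT (g j)).
    { intros j Hj. destruct (Nat.eq_dec j (S m)). subst; auto.
      apply ct_der with (g (S j)). intros; apply Hg; lia. }
    assert (E1 : RInt (fun x => f 0%nat x * g (S m) x) a b = - RInt (fun x => f 1%nat x * g m x) a b).
    { apply ibp1.
      - intros; apply Hf; lia.
      - intros; apply Hg; lia.
      - apply Cfj; lia.
      - apply Cgj; lia.
      - apply Hz; lia.
      - apply Hz; lia. }
    rewrite E1.
    rewrite (IHm (fun j => f (S j)) g a b).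
    + simpl. ring.
    + intros; apply Hf; lia.
    + apply Cfj; lia.
    + intros; apply Hg; lia.
    + apply Cgj; lia.
    + intros; apply Hz; lia.
Qed.

Lemma PD_D1 d g : PD d g -> PD d (Derive g) /\ forall x, is_derive g x (Derive g x).
Proof.
  intros H. destruct (PD_deriv d g H) as [g' [A [_ C]]].
  assert (E : forall x, Derive g x = g' x) by (intros; apply is_derive_unique; auto).
  split.
  - apply PDext with g'. apply PD_le with (pred d); auto; lia. intros; auto.
  - intros x. rewrite E. auto.
Qed.

Lemma PD_Dn d f : PD d f -> forall j, PD d (Derive_n f j) /\
  forall x, is_derive (Derive_n f j) x (Derive_n f (S j) x).
Proof.
  intros H j. induction j.
  - simpl. destruct (PD_D1 d f H) as [_ B]. split.
    + apply PDext with f; auto.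
    + intros x. exact (B x).
  - destruct IHj as [A B]. destruct (PD_D1 d _ A) as [C _].
    assert (C' : PD d (Derive_n f (S j))) by (apply PDext with (Derive (Derive_n f j)); auto).
    split; auto. destruct (PD_D1 d _ C') as [_ D]. intros x. apply D.
Qed.

Lemma PD_Dn_deg d f : PD d f -> forall j, PD (d - j) (Derive_n f j).
Proof.
  intros H j. induction j.
  - simpl. replace (d - 0)%nat with d by lia. apply PDext with f; auto.
  - destruct (PD_deriv _ _ IHj) as [g' [A [_ C]]].
    apply PDext with g'. replace (d - S j)%nat with (pred (d - j)) by lia. auto.
    intros x. simpl. symmetry. apply is_derive_unique. auto.
Qed.

Lemma PD_Dn_zero d f : PD d f -> forall x, Derive_n f (S d) x = 0.
Proof.
  intros H x. pose proof (PD_Dn_deg d f H d) as A. replace (d - d)%nat with 0%nat in A by lia.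
  destruct (PD0_const _ A) as [c Hc]. simpl.
  rewrite (Derive_ext _ (fun _ => c)) by auto. apply Derive_const.
Qed.

Lemma TP_D1 d g : TP d g -> TP d (Derive g) /\ forall x, is_derive g x (Derive g x).
Proof.
  intros H. destruct (TP_deriv d g H) as [g' [A C]].
  assert (E : forall x, Derive g x = g' x) by (intros; apply is_derive_unique; auto).
  split.
  - apply TPext with g'; auto.
  - intros x. rewrite E. auto.
Qed.

Lemma TP_Dn d f : TP d f -> forall j, TP d (Derive_n f j) /\
  forall x, is_derive (Derive_n f j) x (Derive_n f (S j) x).
Proof.
  intros H j. induction j.
  - simpl. destruct (TP_D1 d f H) as [_ B]. split.
    + apply TPext with f; auto.
    + intros x. exact (B x).
  - destruct IHj as [A B]. destruct (TP_D1 d _ A) as [C _].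
    assert (C' : TP d (Derive_n f (S j))) by (apply TPext with (Derive (Derive_n f j)); auto).
    split; auto. destruct (TP_D1 d _ C') as [_ D]. intros x. apply D.
Qed.

Lemma div_bounds (a b x c w : R) : 0 < w -> a * w <= x - c <= b * w -> a <= (x - c) / w <= b.
Proof.
  intros Hw H. split; apply Rmult_le_reg_r with w; auto;
  replace ((x - c) / w * w) with (x - c) by (field; lra); lra.
Qed.

Section Bump.
Variable r : nat.
Definition Phi1 (y : R) := (1 - y ^ 2) ^ r.
Definition Ph (j : nat) := Derive_n Phi1 j.

Lemma Phi1_PD : PD (2 * r) Phi1.
Proof.
  unfold Phi1. induction r.
  - simpl. apply PDc.
  - replace (2 * S n)%nat with (S (S (2 * n))) by lia.
    apply PDext with (fun y => (1 - y^2) * (1 - y^2) ^ n). apply PD_1mt2; auto.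
    intros; simpl; ring.
Qed.

Lemma Ph_der j x : is_derive (Ph j) x (Ph (S j) x).
Proof. unfold Ph. apply (PD_Dn _ _ Phi1_PD j). Qed.

Lemma Ph_CT j : CT (Ph j).
Proof. apply ct_der with (Ph (S j)). intros; apply Ph_der. Qed.

Lemma Ph0 y : Ph 0 y = (1 - y ^ 2) ^ r.
Proof. reflexivity. Qed.

Lemma Ph_factor j : (j <= r)%nat -> exists m G, PD m G /\ forall y, Ph j y = (1 - y ^ 2) ^ (r - j) * G y.
Proof.
  induction j; intros Hj.
  - exists 0%nat, (fun _ => 1). split. apply PDc. intros; rewrite Ph0. replace (r - 0)%nat with r by lia. ring.
  - destruct IHj as [m [G [HG EG]]]. lia.
    destruct (PD_deriv m G HG) as [G' [AG' [_ DG']]].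
    set (k := (r - S j)%nat). assert (Hk : (r - j)%nat = S k) by (unfold k; lia).
    exists (S (S m)), (fun y => (INR (S k) * (-2)) * (y * G y) + (1 - y ^ 2) * G' y).
    split.
    + apply PDplus. apply PDscal. apply PDlift. apply PDx. auto.
      apply PD_1mt2. apply PD_le with (pred m); auto; lia.
    + intros y. unfold Ph. simpl. fold (Ph j).
      rewrite (Derive_ext (Ph j) (fun y => (1 - y ^ 2) ^ (r - j) * G y)) by auto.
      apply is_derive_unique. rewrite Hk.
      eapply dext. apply dmult. apply is_derive_pow.
      eapply dext. apply dminus. apply dconst. apply is_derive_pow. apply did. reflexivity. reflexivity.
      apply DG'. reflexivity.
      simpl. fold k. ring.
Qed.

Lemma Ph_ends j : (j < r)%nat -> Ph j 1 = 0 /\ Ph j (-1) = 0.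
Proof.
  intros Hj. destruct (Ph_factor j ltac:(lia)) as [m [G [_ EG]]].
  rewrite !EG. replace (r - j)%nat with (S (r - j - 1)) by lia. simpl. split; ring.
Qed.

Lemma Ph_parity j y : Ph j (- y) = (-1) ^ j * Ph j y.
Proof.
  revert y. induction j; intros y.
  - rewrite !Ph0. replace ((- y) ^ 2) with (y ^ 2) by ring. simpl. ring.
  - assert (A : is_derive (fun z => Ph j (- z)) y (- Ph (S j) (- y))).
    { assert (Hneg : is_derive (fun z : R => - z) y (-1)) by (auto_derive; auto; ring).
      eapply dext. apply (dcomp (Ph j) (fun z => - z) y). apply Ph_der. exact Hneg.
      intros; reflexivity. ring. }
    assert (B : is_derive (fun z => Ph j (- z)) y ((-1) ^ j * Ph (S j) y)).
    { eapply dext. apply dscal. apply Ph_der. intros; rewrite IHj; auto. reflexivity. }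
    apply is_derive_unique in A. apply is_derive_unique in B. rewrite A in B.
    simpl. lra.
Qed.

Lemma Ph_bound : exists C, 1 <= C /\ forall y, -1 <= y <= 1 -> Rabs (Ph r y) <= C.
Proof.
  destruct (PD_bound _ _ (proj1 (PD_Dn _ _ Phi1_PD r))) as [C HC].
  exists (Rmax 1 C). split. apply Rmax_l. intros y Hy. eapply Rle_trans. apply HC; auto. apply Rmax_r.
Qed.

Definition Psi (c w : R) (j : nat) (x : R) := w ^ (r - j) * Ph j ((x - c) / w).

Lemma Psi_der c w j x : 0 < w -> (j < r)%nat -> is_derive (Psi c w j) x (Psi c w (S j) x).
Proof.
  intros Hw Hj. unfold Psi.
  assert (Hl : is_derive (fun x => (x - c) / w) x (/ w)) by (auto_derive; [auto| field; lra]).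
  eapply dext. apply dscal. apply (dcomp (Ph j) (fun x => (x - c) / w) x). apply Ph_der. exact Hl.
  intros; reflexivity.
  replace (r - j)%nat with (S (r - S j)) by lia. simpl. field. lra.
Qed.

Lemma Psi_CT c w j : CT (Psi c w j).
Proof.
  unfold Psi. apply ct_scal. intros x.
  apply continuous_comp with (f := fun x => (x - c) / w). 
  2: apply Ph_CT.
  apply ct_der with (fun _ => / w). intros y. auto_derive; auto. apply Rmult_1_l.
Qed.

Lemma Psi_ends c w j : 0 < w -> (j < r)%nat -> Psi c w j (c - w) = 0 /\ Psi c w j (c + w) = 0.
Proof.
  intros Hw Hj. unfold Psi. destruct (Ph_ends j Hj) as [A B].
  replace ((c - w - c) / w) with (-1) by (field; lra).
  replace ((c + w - c) / w) with 1 by (field; lra). rewrite A, B. split; ring.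
Qed.

Lemma Psi0_eq c w x : Psi c w 0 x = w ^ r * (1 - ((x - c) / w) ^ 2) ^ r.
Proof. unfold Psi. rewrite Ph0. replace (r - 0)%nat with r by lia. auto. Qed.

Lemma Psi0_bounds c w x : 0 < w -> c - w <= x <= c + w -> 0 <= Psi c w 0 x <= w ^ r.
Proof.
  intros Hw Hx. rewrite Psi0_eq. set (y := (x - c) / w).
  assert (Hy : -1 <= y <= 1).
  { unfold y. apply div_bounds; auto; lra. }
  assert (Hq : 0 <= 1 - y ^ 2 <= 1) by (split; nra).
  assert (0 <= w ^ r) by (apply pow_le; lra).
  split. apply Rmult_le_pos; auto. apply pow_le; lra.
  assert (Hp : (1 - y^2)^r <= 1^r) by (apply pow_incr; exact Hq). rewrite pow1 in Hp.
  rewrite <- (Rmult_1_r (w ^ r)) at 2. apply Rmult_le_compat_l; auto.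
Qed.

Lemma Psi0_lower c w x : 0 < w -> c - w / 2 <= x <= c + w / 2 -> w ^ r * (3/4) ^ r <= Psi c w 0 x.
Proof.
  intros Hw Hx. rewrite Psi0_eq. set (y := (x - c) / w).
  assert (Hy : -1/2 <= y <= 1/2).
  { unfold y. apply div_bounds; auto; lra. }
  apply Rmult_le_compat_l. apply pow_le; lra. apply pow_incr. simpl. nra.
Qed.

Lemma Psir_bound C c w x : 0 < w -> (forall y, -1 <= y <= 1 -> Rabs (Ph r y) <= C) ->
  c - w <= x <= c + w -> Rabs (Psi c w r x) <= C.
Proof.
  intros Hw HC Hx. unfold Psi. replace (r - r)%nat with 0%nat by lia. rewrite pow_O, Rmult_1_l.
  apply HC. apply div_bounds; auto; lra.
Qed.

Lemma Psi_parity w j x : Psi 0 w j (- x) = (-1) ^ j * Psi 0 w j x.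
Proof.
  unfold Psi. replace ((- x - 0) / w) with (- ((x - 0) / w)) by (unfold Rdiv; ring).
  rewrite Ph_parity. ring.
Qed.

End Bump.

Lemma trig_TP n T : (1 <= n)%nat -> is_trig_poly n T -> TP n T.
Proof.
  intros Hn [a [b HT]].
  apply TPext with (fun x => a 0%nat + sum_f 1 n (fun k => a k * cos (INR k * x) + b k * sin (INR k * x))).
  2: intros; rewrite HT; auto.
  apply TPplus. apply TPc.
  unfold sum_f.
  assert (Hgen : forall m, (m + 1 <= n)%nat -> TP n (fun x => sum_f_R0 (fun i => a (i + 1)%nat * cos (INR (i + 1) * x) + b (i + 1)%nat * sin (INR (i + 1) * x)) m)).
  { induction m; intros Hm.
    - simpl. destruct (TP_cossin 1) as [Hc Hs].
      apply TPplus; apply TPscal; apply TP_le with 1%nat; auto.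
    - simpl. apply TPplus. apply IHm; lia.
      destruct (TP_cossin (S m + 1)) as [Hc Hs].
      apply TPplus; apply TPscal; apply TP_le with (S m + 1)%nat; auto. }
  apply Hgen. lia.
Qed.

Lemma alg_PD r P : is_alg_poly r P -> PD r P.
Proof.
  intros [p Hp]. apply PDext with (fun x => sum_f_R0 (fun k => p k * x ^ k) r).
  apply PD_sum. intros; rewrite Hp; auto.
Qed.

Lemma ct_of f : continuity f -> CT f.
Proof. intros H x. apply continuity_pt_filterlim. apply H. Qed.

Definition mon (r j : nat) (x : R) := x ^ (r - j) / INR (fact (r - j)).

Lemma mon_der r j x : (j < r)%nat -> is_derive (mon r j) x (mon r (S j) x).
Proof.
  intros Hj. unfold mon. replace (r - j)%nat with (S (r - S j)) by lia.
  set (k := (r - S j)%nat).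
  assert (Hf : INR (fact k) <> 0) by apply INR_fact_neq_0.
  auto_derive; auto.
  change (match k with 0%nat => 1 | S _ => INR k + 1 end) with (INR (S k)).
  rewrite plus_INR, mult_INR, S_INR. pose proof (pos_INR k).
  assert (0 < INR (fact k)) by (apply lt_0_INR; apply lt_O_fact).
  field. split; auto. nra.
Qed.

Lemma mon_r r x : mon r r x = 1.
Proof. unfold mon. replace (r - r)%nat with 0%nat by lia. simpl. field. Qed.

Lemma ct_pow k : CT (fun x => x ^ k).
Proof. intros x. apply continuity_pt_filterlim. apply derivable_continuous_pt. apply derivable_pt_pow. Qed.
Lemma ct_abs : CT Rabs.
Proof. apply ct_of; apply Rcontinuity_abs. Qed.

Lemma mon_CT r j : CT (mon r j).
Proof.
  apply ct_ext with (fun x => / INR (fact (r - j)) * x ^ (r - j)).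
  apply ct_scal; apply ct_pow. intros; unfold mon, Rdiv; ring.
Qed.

Lemma F_pos r x : (1 <= r)%nat -> 0 <= x -> F r x = mon r 0 x.
Proof.
  intros Hr Hx. unfold F, mon. replace (r - 0)%nat with r by lia.
  replace (Z.of_nat r - 1)%Z with (Z.of_nat (r - 1)) by lia. rewrite <- pow_powerRZ.
  rewrite Rabs_right by lra. replace r with (S (r - 1)) at 3 by lia. simpl. unfold Rdiv. ring.
Qed.

Lemma F_neg r x : (1 <= r)%nat -> x <= 0 -> F r x = - mon r 0 x.
Proof.
  intros Hr Hx. unfold F, mon. replace (r - 0)%nat with r by lia.
  replace (Z.of_nat r - 1)%Z with (Z.of_nat (r - 1)) by lia. rewrite <- pow_powerRZ.
  rewrite Rabs_left1 by lra. replace r with (S (r - 1)) at 3 by lia. simpl. unfold Rdiv. ring.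
Qed.

Lemma F_CT r : (1 <= r)%nat -> CT (F r).
Proof.
  intros Hr. apply ct_ext with (fun x => / INR (fact r) * (Rabs x * x ^ (r - 1))).
  apply ct_scal. apply ct_mult. apply ct_abs. apply ct_pow.
  intros x. unfold F. replace (Z.of_nat r - 1)%Z with (Z.of_nat (r - 1)) by lia.
  rewrite <- pow_powerRZ. auto.
Qed.

Lemma F_odd r x : (1 <= r)%nat -> F r (- x) = - (-1) ^ r * F r x.
Proof.
  intros Hr. unfold F. replace (Z.of_nat r - 1)%Z with (Z.of_nat (r - 1)) by lia.
  rewrite <- !pow_powerRZ. rewrite Rabs_Ropp.
  replace (- x) with ((-1) * x) by ring. rewrite Rpow_mult_distr.
  assert (E : (-1) ^ r = -1 * (-1) ^ (r - 1)).
  { destruct r. lia. simpl. replace (r - 0)%nat with r by lia. ring. }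
  rewrite E. ring.
Qed.

Section Main.
Variables (r n : nat) (b eps C : R) (T P : R -> R).
Hypothesis Hr : (1 <= r)%nat.
Hypothesis Hn : (1 <= n)%nat.
Hypothesis Hb : 0 < b <= PI.
Hypothesis HT : TP n T.
Hypothesis HP : PD r P.
Hypothesis Hsign : forall t, Rabs t <= b -> 0 <= t * Derive_n T (S r) t.
Hypothesis Heps : forall x, -b <= x <= b -> Rabs (F r x + P x - T x) <= eps.
Hypothesis HC1 : 1 <= C.
Hypothesis HC : forall y, -1 <= y <= 1 -> Rabs (Ph r r y) <= C.

Definition hj (j : nat) (x : R) := Derive_n T j x - Derive_n P j x.
Definition U := hj r.
Definition g (x : R) := F r x + P x - T x.

Lemma hj_der j x : is_derive (hj j) x (hj (S j) x).
Proof.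
  unfold hj. apply dminus. apply (proj2 (TP_Dn n T HT j)). apply (proj2 (PD_Dn r P HP j)).
Qed.

Lemma hj_CT j : CT (hj j).
Proof. apply ct_der with (hj (S j)). apply hj_der. Qed.

Lemma U_der x : is_derive U x (Derive_n T (S r) x).
Proof.
  eapply dext. apply hj_der. intros; reflexivity. unfold hj. rewrite (PD_Dn_zero r P HP). ring.
Qed.

Lemma U_TP : TP n U.
Proof.
  pose proof (PD_Dn_deg r P HP r) as A. replace (r - r)%nat with 0%nat in A by lia.
  destruct (PD0_const _ A) as [c Hc].
  apply TPext with (fun x => Derive_n T r x - c). apply TP_minus. apply (proj1 (TP_Dn n T HT r)). apply TPc.
  intros x. unfold U, hj. rewrite Hc. auto.
Qed.

Lemma mono_right x y : 0 <= x -> x <= y -> y <= b -> U x <= U y.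
Proof.
  intros H1 H2 H3. destruct (Req_dec x y) as [E|E]. subst; lra.
  destruct (MVT_cor2 U (Derive_n T (S r)) x y ltac:(lra)) as [c [Ec Hc]].
  { intros c _. apply is_derive_Reals. apply U_der. }
  assert (0 <= Derive_n T (S r) c).
  { pose proof (Hsign c ltac:(rewrite Rabs_right; lra)).
    destruct (Rle_or_lt 0 (Derive_n T (S r) c)); auto. nra. }
  nra.
Qed.

Lemma mono_left x y : -b <= x -> x <= y -> y <= 0 -> U y <= U x.
Proof.
  intros H1 H2 H3. destruct (Req_dec x y) as [E|E]. subst; lra.
  destruct (MVT_cor2 U (Derive_n T (S r)) x y ltac:(lra)) as [c [Ec Hc]].
  { intros c _. apply is_derive_Reals. apply U_der. }
  assert (Derive_n T (S r) c <= 0).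
  { pose proof (Hsign c ltac:(rewrite Rabs_left; lra)).
    destruct (Rle_or_lt (Derive_n T (S r) c) 0); auto. nra. }
  nra.
Qed.

Lemma T_CT : CT T.
Proof. apply ct_der with (Derive_n T 1). intros x. exact (proj2 (TP_Dn n T HT 0) x). Qed.
Lemma P_CT : CT P.
Proof. apply ct_der with (Derive_n P 1). intros x. exact (proj2 (PD_Dn r P HP 0) x). Qed.

Lemma g_CT : CT g.
Proof. unfold g. apply ct_minus. apply ct_plus. apply F_CT; auto. apply P_CT. apply T_CT. Qed.

Lemma ibp_h c w : 0 < w ->
  RInt (fun x => hj 0 x * Psi r c w r x) (c - w) (c + w) = (-1) ^ r * RInt (fun x => U x * Psi r c w 0 x) (c - w) (c + w).
Proof.
  intros Hw. apply (ibp r hj (Psi r c w) (c - w) (c + w)).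
  - intros; apply hj_der.
  - apply hj_CT.
  - intros; apply Psi_der; auto.
  - apply Psi_CT.
  - intros; apply Psi_ends; auto.
Qed.

Lemma ibp_mon c w : 0 < w ->
  RInt (fun x => mon r 0 x * Psi r c w r x) (c - w) (c + w) = (-1) ^ r * RInt (Psi r c w 0) (c - w) (c + w).
Proof.
  intros Hw. rewrite (ibp r (mon r) (Psi r c w) (c - w) (c + w)).
  - f_equal. apply RInt_extR. intros; rewrite mon_r; ring.
  - intros; apply mon_der; auto.
  - apply mon_CT.
  - intros; apply Psi_der; auto.
  - apply Psi_CT.
  - intros; apply Psi_ends; auto.
Qed.

Lemma gbound c w : 0 < w -> -b <= c - w -> c + w <= b ->
  Rabs (RInt (fun x => g x * Psi r c w r x) (c - w) (c + w)) <= eps * C * (2 * w).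
Proof.
  intros Hw H1 H2. replace (2 * w) with ((c + w) - (c - w)) by ring.
  apply RInt_abs_bound. lra. apply ct_mult. apply g_CT. apply Psi_CT.
  intros x Hx. rewrite Rabs_mult. apply Rmult_le_compat; try apply Rabs_pos.
  apply Heps; lra. apply Psir_bound; auto; lra.
Qed.

Lemma right_window c w : 0 < w -> 0 <= c - w -> c + w <= b ->
  Rabs (RInt (Psi r c w 0) (c - w) (c + w) - RInt (fun x => U x * Psi r c w 0 x) (c - w) (c + w)) <= eps * C * (2 * w).
Proof.
  intros Hw H1 H2.
  assert (E : @eq R (RInt (fun x => g x * Psi r c w r x) (c - w) (c + w))
              ((-1) ^ r * (RInt (Psi r c w 0) (c - w) (c + w) - RInt (fun x => U x * Psi r c w 0 x) (c - w) (c + w)))).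
  { rewrite (RInt_extR _ (fun x => mon r 0 x * Psi r c w r x - hj 0 x * Psi r c w r x)).
    rewrite RInt_minusR. rewrite ibp_h, ibp_mon; auto. ring.
    apply ct_mult. apply mon_CT. apply Psi_CT. apply ct_mult. apply hj_CT. apply Psi_CT.
    intros x Hx. rewrite Rmin_left in Hx by lra. unfold g, hj. simpl. rewrite F_pos; auto. ring. lra. }
  pose proof (gbound c w Hw ltac:(lra) H2). rewrite E in H. rewrite Rabs_mult, pow_1_abs, Rmult_1_l in H. auto.
Qed.

Lemma left_window c w : 0 < w -> -b <= c - w -> c + w <= 0 ->
  Rabs (RInt (Psi r c w 0) (c - w) (c + w) + RInt (fun x => U x * Psi r c w 0 x) (c - w) (c + w)) <= eps * C * (2 * w).
Proof.
  intros Hw H1 H2.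
  assert (E : @eq R (RInt (fun x => g x * Psi r c w r x) (c - w) (c + w))
              (- (-1) ^ r * (RInt (Psi r c w 0) (c - w) (c + w) + RInt (fun x => U x * Psi r c w 0 x) (c - w) (c + w)))).
  { rewrite (RInt_extR _ (fun x => (-1) * (mon r 0 x * Psi r c w r x) - hj 0 x * Psi r c w r x)).
    rewrite RInt_minusR, RInt_scalR. rewrite ibp_h, ibp_mon; auto. ring.
    apply ct_mult. apply mon_CT. apply Psi_CT. apply ct_scal. apply ct_mult. apply mon_CT. apply Psi_CT.
    apply ct_mult. apply hj_CT. apply Psi_CT.
    intros x Hx. rewrite Rmax_right in Hx by lra. unfold g, hj. simpl. rewrite F_neg; auto. ring. lra. }
  pose proof (gbound c w Hw H1 ltac:(lra)). rewrite E in H.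
  rewrite Rabs_mult, Rabs_Ropp, pow_1_abs, Rmult_1_l in H. auto.
Qed.

Lemma central_window w : 0 < w -> w <= b ->
  Rabs (RInt (fun x => U x * Psi r 0 w 0 x) (0 - w) (0 + w)) <= eps * C * (2 * w).
Proof.
  intros Hw H1.
  assert (E : @eq R (RInt (fun x => g x * Psi r 0 w r x) (0 - w) (0 + w))
              (- (-1) ^ r * RInt (fun x => U x * Psi r 0 w 0 x) (0 - w) (0 + w))).
  { rewrite (RInt_extR _ (fun x => F r x * Psi r 0 w r x - hj 0 x * Psi r 0 w r x)).
    rewrite RInt_minusR. rewrite ibp_h; auto.
    replace (0 - w) with (- w) by ring. replace (0 + w) with w by ring.
    rewrite RInt_odd. ring.
    apply ct_mult. apply F_CT; auto. apply Psi_CT.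
    intros x. rewrite F_odd, Psi_parity; auto.
    assert (E2 : (-1) ^ r * (-1) ^ r = 1).
    { rewrite <- Rpow_mult_distr. replace (-1 * -1) with 1 by ring. apply pow1. }
    transitivity (- ((-1) ^ r * (-1) ^ r) * (F r x * Psi r 0 w r x)). ring. rewrite E2. ring.
    apply ct_mult. apply F_CT; auto. apply Psi_CT. apply ct_mult. apply hj_CT. apply Psi_CT.
    intros x Hx. unfold g, hj. simpl. ring. }
  pose proof (gbound 0 w Hw ltac:(lra) ltac:(lra)). rewrite E in H.
  rewrite Rabs_mult, Rabs_Ropp, pow_1_abs, Rmult_1_l in H. auto.
Qed.

Definition K := 2 * C * (16/3) ^ r.

Lemma eps_nonneg : 0 <= eps.
Proof. pose proof (Heps 0 ltac:(lra)). pose proof (Rabs_pos (F r 0 + P 0 - T 0)). lra. Qed.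

Lemma br_pos : 0 < b ^ r.
Proof. apply pow_lt; lra. Qed.

Lemma K_pos : 0 < K.
Proof. unfold K. assert (0 < (16/3)^r) by (apply pow_lt; lra). nra. Qed.

Lemma q_id : (16/3) ^ r * ((b/4) ^ r * (3/4) ^ r) = b ^ r.
Proof. rewrite <- Rpow_mult_distr, <- Rpow_mult_distr. f_equal. field. Qed.

Lemma window_lower c w : 0 < w -> w * (w ^ r * (3/4) ^ r) <= RInt (Psi r c w 0) (c - w) (c + w).
Proof.
  intros Hw. replace (w * (w ^ r * (3/4) ^ r)) with ((w ^ r * (3/4) ^ r) * ((c + w/2) - (c - w/2))) by field.
  apply RInt_lower; try lra. apply Psi_CT.
  intros x Hx. apply (Psi0_bounds r c w x Hw). lra.
  intros x Hx. apply Psi0_lower; auto. lra.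
Qed.

Lemma U_right t : 0 <= t <= b/2 -> U t <= 1 + K * (eps / b ^ r).
Proof.
  intros Ht. set (w := b/4). set (c := t + w).
  assert (Hw : 0 < w) by (unfold w; lra).
  pose proof (right_window c w Hw ltac:(unfold c; lra) ltac:(unfold c, w; lra)) as RW.
  replace (c - w) with t in RW by (unfold c; ring).
  set (A0 := RInt (Psi r c w 0) t (c + w)) in *.
  set (AU := RInt (fun x => U x * Psi r c w 0 x) t (c + w)) in *.
  assert (HA0 : w * (w ^ r * (3/4) ^ r) <= A0).
  { unfold A0. replace t with (c - w) by (unfold c; ring). apply window_lower; auto. }
  assert (HAU : U t * A0 <= AU).
  { unfold A0, AU. rewrite <- RInt_scalR by apply Psi_CT. apply RInt_leR. unfold c; lra.
    apply ct_scal, Psi_CT. apply ct_mult. apply ct_der with (Derive_n T (S r)). apply U_der. apply Psi_CT.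
    intros x Hx. apply Rmult_le_compat_r. destruct (Psi0_bounds r c w x Hw) as [P1 _]; [unfold c in *; lra | exact P1].
    apply mono_right; unfold c, w in *; lra. }
  pose proof eps_nonneg. pose proof br_pos. pose proof K_pos.
  assert (0 <= K * (eps / b ^ r)) by (apply Rmult_le_pos; [lra| apply Rdiv_le_0_compat; lra]).
  destruct (Rle_or_lt (U t) 1) as [Hu|Hu]; [lra|].
  apply Rabs_le_between in RW.
  assert (Hq : 0 < w ^ r * (3/4) ^ r) by (apply Rmult_lt_0_compat; apply pow_lt; lra).
  assert (Hk : (U t - 1) * (w * (w ^ r * (3/4) ^ r)) <= eps * C * (2 * w)).
  { apply Rle_trans with ((U t - 1) * A0). apply Rmult_le_compat_l; lra. lra. }
  assert (Hk2 : (U t - 1) * (w ^ r * (3/4) ^ r) <= 2 * eps * C).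
  { apply Rmult_le_reg_l with w; auto. nra. }
  assert (E : K * (eps / b ^ r) = 2 * eps * C / (w ^ r * (3/4) ^ r)).
  { unfold K. rewrite <- q_id. unfold w. field; repeat split; apply pow_nonzero; lra. }
  rewrite E. apply Rle_trans with (1 + (U t - 1)). lra. apply Rplus_le_compat_l.
  apply Rmult_le_reg_r with (w ^ r * (3/4) ^ r); auto. unfold Rdiv. rewrite Rmult_assoc, Rinv_l; lra.
Qed.

Lemma U_left t : -(b/2) <= t <= 0 -> U t <= -1 + K * (eps / b ^ r).
Proof.
  intros Ht. set (w := b/4). set (c := t - w).
  assert (Hw : 0 < w) by (unfold w; lra).
  pose proof (left_window c w Hw ltac:(unfold c, w; lra) ltac:(unfold c; lra)) as RW.
  replace (c + w) with t in RW by (unfold c; ring).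
  set (A0 := RInt (Psi r c w 0) (c - w) t) in *.
  set (AU := RInt (fun x => U x * Psi r c w 0 x) (c - w) t) in *.
  assert (HA0 : w * (w ^ r * (3/4) ^ r) <= A0).
  { unfold A0. replace t with (c + w) by (unfold c; ring). apply window_lower; auto. }
  assert (HAU : U t * A0 <= AU).
  { unfold A0, AU. rewrite <- RInt_scalR by apply Psi_CT. apply RInt_leR. unfold c; lra.
    apply ct_scal, Psi_CT. apply ct_mult. apply ct_der with (Derive_n T (S r)). apply U_der. apply Psi_CT.
    intros x Hx. apply Rmult_le_compat_r. destruct (Psi0_bounds r c w x Hw) as [P1 _]; [unfold c in *; lra | exact P1].
    apply mono_left; unfold c, w in *; lra. }
  pose proof eps_nonneg. pose proof br_pos. pose proof K_pos.
  assert (0 <= K * (eps / b ^ r)) by (apply Rmult_le_pos; [lra| apply Rdiv_le_0_compat; lra]).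
  destruct (Rle_or_lt (U t) (-1)) as [Hu|Hu]; [lra|].
  apply Rabs_le_between in RW.
  assert (Hq : 0 < w ^ r * (3/4) ^ r) by (apply Rmult_lt_0_compat; apply pow_lt; lra).
  assert (Hk : (U t + 1) * (w * (w ^ r * (3/4) ^ r)) <= eps * C * (2 * w)).
  { apply Rle_trans with ((U t + 1) * A0). apply Rmult_le_compat_l; lra. lra. }
  assert (Hk2 : (U t + 1) * (w ^ r * (3/4) ^ r) <= 2 * eps * C).
  { apply Rmult_le_reg_l with w; auto. nra. }
  assert (E : K * (eps / b ^ r) = 2 * eps * C / (w ^ r * (3/4) ^ r)).
  { unfold K. rewrite <- q_id. unfold w. field; repeat split; apply pow_nonzero; lra. }
  rewrite E. apply Rle_trans with (-1 + (U t + 1)). lra. apply Rplus_le_compat_l.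
  apply Rmult_le_reg_r with (w ^ r * (3/4) ^ r); auto. unfold Rdiv. rewrite Rmult_assoc, Rinv_l; lra.
Qed.

Lemma U_CT : CT U.
Proof. apply ct_der with (Derive_n T (S r)). apply U_der. Qed.

Lemma central_est a0 : 0 < a0 <= b/4 -> (forall t, 0 <= t <= a0 -> U t <= 0) ->
  a0 * ((b/2) ^ r * (3/4) ^ r) <= 2 * K * (eps / b ^ r) * ((b/2) * (b/2) ^ r) + eps * C * b.
Proof.
  intros Ha Hu. set (be := b/2). set (eta := eps / b ^ r).
  assert (Hbe : 0 < be) by (unfold be; lra).
  pose proof (central_window be Hbe ltac:(unfold be; lra)) as CW.
  replace (0 - be) with (- be) in CW by ring. replace (0 + be) with be in CW by ring.
  set (Ps := Psi r 0 be 0) in *.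
  assert (CPs : CT Ps) by apply Psi_CT.
  assert (CUP : CT (fun x => U x * Ps x)) by (apply ct_mult; [apply U_CT|auto]).
  assert (Pnn : forall x, - be <= x <= be -> 0 <= Ps x).
  { intros x Hx. apply (Psi0_bounds r 0 be x Hbe). lra. }
  pose proof eps_nonneg. pose proof br_pos. pose proof K_pos.
  assert (Heta : 0 <= eta) by (unfold eta; apply Rdiv_le_0_compat; lra).
  set (A := RInt Ps 0 be). set (A0 := RInt Ps 0 a0).
  assert (HAL : RInt Ps (- be) 0 = A).
  { apply RInt_even; auto. intros x. unfold Ps. rewrite Psi_parity. simpl; ring. }
  assert (Hsplit : RInt (fun x => U x * Ps x) (- be) be =
     RInt (fun x => U x * Ps x) (- be) 0 + RInt (fun x => U x * Ps x) 0 a0 + RInt (fun x => U x * Ps x) a0 be).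
  { rewrite <- (ChaslesR _ (- be) 0 be CUP), <- (ChaslesR _ 0 a0 be CUP). lra. }
  assert (I1 : RInt (fun x => U x * Ps x) (- be) 0 <= (-1 + K * eta) * A).
  { rewrite <- HAL, <- RInt_scalR by auto. apply RInt_leR; try lra; auto. apply ct_scal; auto.
    intros x Hx. apply Rmult_le_compat_r. apply Pnn; lra. apply U_left. unfold be in *; lra. }
  assert (I2 : RInt (fun x => U x * Ps x) 0 a0 <= 0).
  { assert (Q : RInt (fun x => U x * Ps x) 0 a0 <= RInt (fun _ => 0) 0 a0).
    { apply RInt_leR; try lra; auto. apply ct_const.
      intros x Hx. assert (U x <= 0) by (apply Hu; lra). assert (0 <= Ps x) by (apply Pnn; unfold be; lra). nra. }
    rewrite RInt_constR in Q. lra. }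
  assert (I3 : RInt (fun x => U x * Ps x) a0 be <= (1 + K * eta) * (A - A0)).
  { replace (A - A0) with (RInt Ps a0 be) by (unfold A, A0; rewrite <- (ChaslesR Ps 0 a0 be CPs); lra).
    rewrite <- RInt_scalR by auto. apply RInt_leR; try (unfold be; lra); auto. apply ct_scal; auto.
    intros x Hx. apply Rmult_le_compat_r. apply Pnn; unfold be in *; lra. apply U_right. unfold be in *; lra. }
  assert (HA : A <= be * be ^ r).
  { unfold A. replace (be * be ^ r) with (be ^ r * (be - 0)) by ring. rewrite <- RInt_constR.
    apply RInt_leR; try lra; auto. apply ct_const. intros x Hx. apply (Psi0_bounds r 0 be x Hbe). lra. }
  assert (HA0 : a0 * (be ^ r * (3/4) ^ r) <= A0).
  { unfold A0. replace (a0 * (be ^ r * (3/4) ^ r)) with ((be ^ r * (3/4) ^ r) * (a0 - 0)) by ring.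
    apply RInt_lower; try lra; auto. intros x Hx. apply Pnn; unfold be in *; lra.
    intros x Hx. apply Psi0_lower; auto. unfold be in *; lra. }
  assert (HA0p : 0 <= A0) by (eapply Rle_trans; [|exact HA0]; apply Rmult_le_pos; [lra| apply Rmult_le_pos; apply pow_le; lra]).
  apply Rabs_le_between in CW.
  assert (HKe : 0 <= K * eta) by (apply Rmult_le_pos; lra).
  assert (A0 <= (1 + K * eta) * A0) by nra.
  assert (2 * K * eta * A <= 2 * K * eta * (be * be ^ r)) by (apply Rmult_le_compat_l; nra).
  replace (2 * K * (eps / b ^ r) * (b / 2 * (b / 2) ^ r)) with (2 * K * eta * (be * be ^ r)) by reflexivity.
  replace (eps * C * b) with (eps * C * (2 * be)) by (unfold be; field).
  lra.
Qed.

Definition c1 := (3/4) ^ r / (108 * (2 * K + 2 ^ (S r) * C)).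
Definition c0 := Rmin (1 / (2 * K)) c1.

Lemma main_est : c0 * b ^ r <= INR n * eps.
Proof.
  pose proof eps_nonneg. pose proof br_pos. pose proof K_pos.
  assert (HnR : 1 <= INR n) by (apply (le_INR 1); auto).
  set (eta := eps / b ^ r).
  assert (Heps_eta : eps = eta * b ^ r) by (unfold eta; field; lra).
  assert (Heta : 0 <= eta) by (unfold eta; apply Rdiv_le_0_compat; lra).
  assert (Hc0 : 0 < c0).
  { unfold c0, c1. apply Rmin_pos. apply Rdiv_lt_0_compat; lra.
    apply Rdiv_lt_0_compat. apply pow_lt; lra. assert (0 < 2 ^ S r) by (apply pow_lt; lra). nra. }
  destruct (Rle_or_lt (K * eta) (1/2)) as [Hsmall|Hbig].
  2:{ assert (1 / (2 * K) < eta).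
      { apply Rmult_lt_reg_l with (2 * K). lra. field_simplify; lra. }
      assert (c0 <= 1 / (2 * K)) by apply Rmin_l.
      rewrite Heps_eta. apply Rle_trans with (eta * b ^ r). apply Rmult_le_compat_r; lra.
      rewrite <- (Rmult_1_l (eta * b ^ r)) at 1. apply Rmult_le_compat_r; nra. }
  set (be := b / 2).
  set (m := U 0).
  assert (Hm : m <= -1 + K * eta) by (apply U_left; lra).
  set (M := -3 * m).
  assert (Hbound : forall x, - be <= x <= be -> Rabs (U x) <= M).
  { intros x Hx. apply Rabs_le. unfold M. destruct (Rle_or_lt 0 x).
    - assert (m <= U x) by (apply mono_right; unfold be in *; lra).
      assert (U x <= 1 + K * eta) by (apply U_right; unfold be in *; lra). lra.
    - assert (m <= U x) by (apply mono_left; unfold be in *; lra).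
      assert (U x <= -1 + K * eta) by (apply U_left; unfold be in *; lra). lra. }
  assert (Hbe : 0 < be <= PI / 2) by (unfold be; lra).
  pose proof (loc_bern n U M be Hn U_TP Hbe Hbound) as LB.
  set (a0 := be / (108 * INR n)).
  assert (Ha0 : 0 < a0 <= be / 2).
  { unfold a0. split. apply Rdiv_lt_0_compat; lra.
    apply Rmult_le_reg_r with (108 * INR n). lra. unfold Rdiv. rewrite Rmult_assoc, Rinv_l by lra. nra. }
  assert (HU0 : forall t, 0 <= t <= a0 -> U t <= 0).
  { intros t Ht. specialize (LB t ltac:(lra)). apply Rabs_le_between in LB.
    assert (36 * INR n * M * t / be <= 36 * INR n * M * a0 / be).
    { unfold Rdiv. apply Rmult_le_compat_r. left; apply Rinv_0_lt_compat; lra.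
      apply Rmult_le_compat_l. unfold M. nra. lra. }
    assert (E : 36 * INR n * M * a0 / be = - m) by (unfold a0, M; field; lra).
    fold m in LB. lra. }
  pose proof (central_est a0 ltac:(unfold be in *; lra) HU0) as CE.
  fold be eta in CE.
  set (Y := be ^ r). assert (HY : 0 < Y) by (apply pow_lt; lra).
  assert (Hb2 : b ^ r = 2 ^ r * Y) by (unfold Y, be; rewrite <- Rpow_mult_distr; f_equal; field).
  assert (Hq : 0 < (3/4) ^ r) by (apply pow_lt; lra).
  assert (H2r : 0 < 2 ^ r) by (apply pow_lt; lra).
  rewrite Heps_eta, Hb2 in CE.
  replace b with (2 * be) in CE by (unfold be; field).
  (* CE : a0 * (Y * (3/4)^r) <= 2 * K * eta * (be * Y) + eta * (2^r * Y) * C * (2 * be) *)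
  assert (CE2 : (3/4) ^ r <= INR n * eta * (108 * (2 * K + 2 ^ S r * C))).
  { apply Rmult_le_reg_r with (be * Y / (108 * INR n)).
    apply Rdiv_lt_0_compat; nra.
    replace ((3/4) ^ r * (be * Y / (108 * INR n))) with (a0 * (Y * (3/4) ^ r)) by (unfold a0; field; lra).
    replace (INR n * eta * (108 * (2 * K + 2 ^ S r * C)) * (be * Y / (108 * INR n)))
      with (2 * K * eta * (be * Y) + eta * (2 ^ r * Y) * C * (2 * be)) by (simpl; field; lra).
    exact CE. }
  assert (Hc1 : c1 <= INR n * eta).
  { unfold c1. assert (0 < 108 * (2 * K + 2 ^ S r * C)) by (assert (0 < 2 ^ S r) by (apply pow_lt; lra); nra).
    apply Rmult_le_reg_r with (108 * (2 * K + 2 ^ S r * C)); auto.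
    unfold Rdiv. rewrite Rmult_assoc, Rinv_l by lra. lra. }
  assert (c0 <= c1) by apply Rmin_r.
  rewrite Heps_eta. nra.
Qed.

End Main.


Lemma c0_pos r C : 1 <= C -> 0 < c0 r C.
Proof.
  intros HC. unfold c0, c1, K. assert (0 < (16/3) ^ r) by (apply pow_lt; lra).
  assert (0 < 2 ^ S r) by (apply pow_lt; lra).
  apply Rmin_pos. apply Rdiv_lt_0_compat; nra.
  apply Rdiv_lt_0_compat. apply pow_lt; lra. nra.
Qed.

Lemma cont_eps f x0 e : continuity_pt f x0 -> 0 < e ->
  exists d, 0 < d /\ forall x, x <> x0 -> Rabs (x - x0) < d -> Rabs (f x - f x0) < e.
Proof.
  intros H He. destruct (H e He) as [d [Hd Hx]]. exists d. split; auto.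
  intros x Hne Hlt. apply (Hx x). split. split. exact I. auto. simpl; unfold R_dist; auto.
Qed.

Theorem lemma4p2 (r : nat) :
  exists c3 : R, 0 < c3 /\
    forall (b : R) (n : nat) (T P : R -> R),
      0 < b <= PI ->
      (1 <= n)%nat ->
      is_trig_poly n T ->
      (forall t : R, Rabs t <= b -> 0 <= t * Derive_n T (S r) t) ->
      is_alg_poly r P ->
      exists x : R, -b <= x <= b /\
        INR n * Rabs (F r x + P x - T x) >= c3 * b ^ r.
Proof.
  destruct r as [|r'].
  - exists (1/2). split. lra.
    intros b n T P Hb Hn HT Hs HP.
    assert (HnR : 1 <= INR n) by (apply (le_INR 1); auto).
    destruct HP as [p Hp].
    assert (TPT := trig_TP n T Hn HT).
    destruct (cont_eps T 0 (1/2) (TP_cont n T TPT 0) ltac:(lra)) as [d [Hd Hc]].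
    set (x := Rmin (d/2) b).
    assert (Hx : 0 < x <= b /\ x < d).
    { unfold x. split. split. apply Rmin_glb_lt; lra. apply Rmin_r.
      apply Rle_lt_trans with (d/2). apply Rmin_l. lra. }
    assert (F1 : F 0 x = 1).
    { unfold F. simpl. rewrite Rabs_right by lra. simpl. field. lra. }
    assert (F2 : F 0 (- x) = -1).
    { unfold F. simpl. rewrite Rabs_left by lra. simpl. field. lra. }
    pose proof (Hc x ltac:(lra) ltac:(rewrite Rminus_0_r, Rabs_right; lra)) as C1.
    pose proof (Hc (- x) ltac:(lra) ltac:(rewrite Rminus_0_r, Rabs_left; lra)) as C2.
    destruct (Rle_or_lt (1/2) (Rabs (F 0 x + p 0%nat * 1 - T x))) as [Ha|Ha].
    + exists x. split. lra. rewrite Hp. simpl. apply Rle_ge. rewrite Rmult_1_r.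
      rewrite <- (Rmult_1_l (1/2)). apply Rmult_le_compat; try lra.
    + exists (- x). split. lra. rewrite Hp. simpl. apply Rle_ge. rewrite Rmult_1_r.
      rewrite <- (Rmult_1_l (1/2)). apply Rmult_le_compat; try lra.
      rewrite F1 in Ha. rewrite F2.
      apply Rabs_def2 in C1. apply Rabs_def2 in C2.
      apply Rnot_lt_le. intro Hb2. apply Rabs_def2 in Hb2. apply Rabs_def2 in Ha. lra.
  - set (r := S r').
    assert (Hr : (1 <= r)%nat) by (unfold r; lia).
    destruct (Ph_bound r) as [C [HC1 HC]].
    exists (c0 r C / 2). split. pose proof (c0_pos r C HC1). lra.
    intros b n T P Hb Hn HT Hs HP.
    assert (HnR : 1 <= INR n) by (apply (le_INR 1); auto).
    assert (Hbr : 0 < b ^ r) by (apply pow_lt; lra).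
    pose proof (c0_pos r C HC1) as Hc0.
    destruct (classic (exists x : R, -b <= x <= b /\ INR n * Rabs (F r x + P x - T x) >= c0 r C / 2 * b ^ r)) as [Hex|Hno]; auto.
    exfalso.
    set (eps := c0 r C / 2 * b ^ r / INR n).
    assert (Heps : forall x, -b <= x <= b -> Rabs (F r x + P x - T x) <= eps).
    { intros x Hx. destruct (Rle_or_lt (Rabs (F r x + P x - T x)) eps) as [L|L]; auto.
      exfalso. apply Hno. exists x. split; auto. apply Rle_ge. unfold eps in L.
      apply Rmult_lt_compat_l with (r := INR n) in L; [|lra].
      replace (INR n * (c0 r C / 2 * b ^ r / INR n)) with (c0 r C / 2 * b ^ r) in L by (field; lra). lra. }
    pose proof (main_est r n b eps C T P Hr Hn Hb (trig_TP n T Hn HT) (alg_PD r P HP) Hs Heps HC1 HC) as ME.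
    unfold eps in ME. replace (INR n * (c0 r C / 2 * b ^ r / INR n)) with (c0 r C / 2 * b ^ r) in ME by (field; lra).
    nra.
Qed.
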